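(* Let $\rho\in\mathbb R$, let $\mathbf a=\{a_n\}_{n\ge1}$ be an admissible sequence of non-negative real numbers, and let $\kappa_{\mathbf a}(s,u)=\sum_{n\ge1}a_nn^{-s-\bar u}$ be the diagonal Dirichlet series kernel on $\mathbb H_\rho\times\mathbb H_\rho$ with reproducing kernel Hilbert space $\mathscr H_{\mathbf a}$; write $\kappa_{\mathbf a,u}=\kappa_{\mathbf a}(\cdot,u)$. Then for every real $\alpha>\rho$, the family $\{\kappa_{\mathbf a,\alpha+ib}:b\in\mathbb R\}$ is a linearly independent total subset of $\mathscr H_{\mathbf a}$.
   Context: $\mathbb H_\rho=\{\Re s>\rho\}$. The diagonal kernel $\kappa_{\mathbf a}$ is assumed convergent on $\mathbb H_\rho\times\mathbb H_\rho$; $\mathscr H_{\mathbf a}$ is the Hilbert space of functions on $\mathbb H_\rho$ with $\kappa_{\mathbf a}(\cdot,t)\in\mathscr H_{\mathbf a}$ and $\langle f,\kappa_{\mathbf a}(\cdot,t)\rangle=f(t)$. A real sequence $\mathbf a$ is admissible if $\mathrm{supp}(\mathbf a)=\{n:a_n\ne0\}$ is an infinite subset of $\mathbb N$ closed under multiplication and contains $p,q\ne1$ with $\gcd(p,q)=1$. Total: the closed linear span is the whole space. *)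

(* Defs.v *)
From Stdlib Require Import Reals Lra List.
From Coquelicot Require Import Coquelicot.
Open Scope R_scope.

(** n^{-z} for a positive integer n and complex z:
    n^{-z} = e^{-x ln n} (cos (y ln n) - i sin (y ln n)),  z = x + i y. *)
Definition npow_neg (n : nat) (z : C) : C :=
  (exp (- Re z * ln (INR n)) * cos (Im z * ln (INR n)),
   - (exp (- Re z * ln (INR n)) * sin (Im z * ln (INR n)))).

(** The coefficient sequence a = (a_n)_{n >= 1} is modelled by a : nat -> R,
    the value a 0 being ignored everywhere. *)

(** General term a_n n^{-s - conj u}, reindexed from 0 (term k is n = k+1). *)
Definition kterm (a : nat -> R) (s u : C) (k : nat) : C :=
  Cmult (RtoC (a (S k))) (npow_neg (S k) (Cplus s (Cconj u))).

(** kappa_a(s,u) = sum_{n>=1} a_n n^{-s-conj u} (sum of the real and imaginary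
    parts; equals the complex sum whenever the series converges). *)
Definition kappa (a : nat -> R) (s u : C) : C :=
  (Series (fun k => Re (kterm a s u k)), Series (fun k => Im (kterm a s u k))).

Definition Hrho (rho : R) : Type := { s : C | rho < Re s }.

Definition supp (a : nat -> R) (n : nat) : Prop := (1 <= n)%nat /\ a n <> 0.

Definition admissible (a : nat -> R) : Prop :=
  (forall N : nat, exists n : nat, (N < n)%nat /\ supp a n) /\
  (forall m n : nat, supp a m -> supp a n -> supp a (m * n)) /\
  (exists p q : nat, supp a p /\ supp a q /\ p <> 1%nat /\ q <> 1%nat /\
                     Nat.gcd p q = 1%nat).

Definition kernel_convergent (rho : R) (a : nat -> R) : Prop :=
  forall s u : C, rho < Re s -> rho < Re u -> ex_series (kterm a s u).

Definition fzero {T : Type} : T -> C := fun _ => RtoC 0.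
Definition fadd {T : Type} (f g : T -> C) : T -> C := fun s => Cplus (f s) (g s).
Definition fscale {T : Type} (c : C) (f : T -> C) : T -> C := fun s => Cmult c (f s).
Definition fsub {T : Type} (f g : T -> C) : T -> C :=
  fun s => Cminus (f s) (g s).

Definition hnorm {T : Type} (ip : (T -> C) -> (T -> C) -> C) (f : T -> C) : R :=
  sqrt (Re (ip f f)).

Record HilbertFunctionSpace {T : Type} (H : (T -> C) -> Prop)
    (ip : (T -> C) -> (T -> C) -> C) : Prop := {
  hfs_zero : H fzero;
  hfs_add : forall f g, H f -> H g -> H (fadd f g);
  hfs_scale : forall c f, H f -> H (fscale c f);
  hfs_lin : forall c f g h, H f -> H g -> H h ->
      ip (fadd (fscale c f) g) h = Cplus (Cmult c (ip f h)) (ip g h);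
  hfs_sym : forall f g, H f -> H g -> ip g f = Cconj (ip f g);
  hfs_pos : forall f, H f -> Im (ip f f) = 0 /\ 0 <= Re (ip f f);
  hfs_def : forall f, H f -> ip f f = RtoC 0 -> forall s, f s = RtoC 0;
  hfs_complete : forall F : nat -> T -> C, (forall n, H (F n)) ->
      (forall eps : R, 0 < eps -> exists N : nat, forall m n : nat,
          (N <= m)%nat -> (N <= n)%nat -> hnorm ip (fsub (F m) (F n)) < eps) ->
      exists g, H g /\ forall eps : R, 0 < eps -> exists N : nat, forall n : nat,
          (N <= n)%nat -> hnorm ip (fsub (F n) g) < eps
}.

(** H (with ip) is the reproducing kernel Hilbert space of the kernel
    kappa_a on H_rho: it contains each kappa_a(., t) and
    <f, kappa_a(., t)> = f(t).  (By Moore-Aronszajn such H is unique.) *)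
Definition kfun (rho : R) (a : nat -> R) (u : C) : Hrho rho -> C :=
  fun s => kappa a (proj1_sig s) u.

Definition is_RKHS (rho : R) (a : nat -> R) (H : (Hrho rho -> C) -> Prop)
    (ip : (Hrho rho -> C) -> (Hrho rho -> C) -> C) : Prop :=
  HilbertFunctionSpace H ip /\
  (forall t : Hrho rho, H (kfun rho a (proj1_sig t))) /\
  (forall (f : Hrho rho -> C) (t : Hrho rho), H f ->
      ip f (kfun rho a (proj1_sig t)) = f t).

Definition klincomb (rho : R) (a : nat -> R) (alpha : R) (bs : list R)
    (c : R -> C) : Hrho rho -> C :=
  fold_right (fun b acc => fadd (fscale (c b) (kfun rho a (alpha, b))) acc)
             fzero bs.

(* Main.v *)
Require Import Defs.
From Stdlib Require Import Reals List Lra Lia Arith ZArith Classical FunctionalExtensionality IndefiniteDescription.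
From Coquelicot Require Import Coquelicot.
Open Scope R_scope.

Lemma C_ext (x y : C) : fst x = fst y -> snd x = snd y -> x = y.
Proof. destruct x, y; simpl; intros; subst; reflexivity. Qed.

Ltac csimpl := unfold Cplus, Cmult, Cconj, Copp, Cminus, RtoC, Re, Im; simpl.
Ltac ceq := apply C_ext; csimpl; ring.

Lemma npow_add n z w : npow_neg n (Cplus z w) = Cmult (npow_neg n z) (npow_neg n w).
Proof.
  unfold npow_neg; destruct z as [x y], w as [u v]; csimpl.
  replace (- (x+u) * ln (INR n)) with (- x * ln (INR n) + - u * ln (INR n)) by ring.
  replace ((y+v) * ln (INR n)) with (y * ln (INR n) + v * ln (INR n)) by ring.
  rewrite exp_plus, cos_plus, sin_plus. apply C_ext; simpl; ring.
Qed.

Lemma npow_conj n z : npow_neg n (Cconj z) = Cconj (npow_neg n z).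
Proof.
  unfold npow_neg; destruct z as [x y]; csimpl.
  replace (- y * ln (INR n)) with (- (y * ln (INR n))) by ring.
  rewrite cos_neg, sin_neg. apply C_ext; simpl; ring.
Qed.

Definition nsq (z : C) : R := fst z * fst z + snd z * snd z.

Lemma nsq_ge0 z : 0 <= nsq z.
Proof. unfold nsq; nra. Qed.

Lemma npow_nsq n z : nsq (npow_neg n z) = exp (- Re z * ln (INR n)) * exp (- Re z * ln (INR n)).
Proof.
  unfold nsq, npow_neg; simpl.
  pose proof (sin2_cos2 (Im z * ln (INR n))). unfold Rsqr in H. nra.
Qed.

Lemma fst_sum_n (f : nat -> C) n : fst (sum_n f n) = sum_n (fun k => fst (f k)) n.
Proof.
  induction n.
  - rewrite !sum_O. reflexivity.
  - rewrite !sum_Sn, <- IHn. reflexivity.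
Qed.

Lemma snd_sum_n (f : nat -> C) n : snd (sum_n f n) = sum_n (fun k => snd (f k)) n.
Proof.
  induction n.
  - rewrite !sum_O. reflexivity.
  - rewrite !sum_Sn, <- IHn. reflexivity.
Qed.

Lemma is_series_fst (f : nat -> C) l : is_series f l -> is_series (fun k => fst (f k)) (fst l).
Proof.
  unfold is_series. intros Hf.
  apply filterlim_ext with (fun n => fst (sum_n f n)).
  { intros; apply fst_sum_n. }
  intros P [eps HP]. apply (Hf (fun z => P (fst z))). exists eps. intros y [H1 H2]. apply HP. exact H1.
Qed.

Lemma is_series_snd (f : nat -> C) l : is_series f l -> is_series (fun k => snd (f k)) (snd l).
Proof.
  unfold is_series. intros Hf.
  apply filterlim_ext with (fun n => snd (sum_n f n)).
  { intros; apply snd_sum_n. }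
  intros P [eps HP]. apply (Hf (fun z => P (snd z))). exists eps. intros y [H1 H2]. apply HP. exact H2.
Qed.


Definition csum {A : Type} (f : A -> C) (l : list A) : C :=
  fold_right (fun x acc => Cplus (f x) acc) (RtoC 0) l.
Definition rsum {A : Type} (f : A -> R) (l : list A) : R :=
  fold_right (fun x acc => f x + acc) 0 l.

Lemma re_csum {A} (f : A -> C) l : fst (csum f l) = rsum (fun x => fst (f x)) l.
Proof. induction l; simpl; auto. rewrite IHl; reflexivity. Qed.

Lemma csum_mult_conj {A B} (f : A -> C) (g : B -> C) l1 l2 :
  Cmult (csum f l1) (Cconj (csum g l2)) =
  csum (fun x => csum (fun y => Cmult (f x) (Cconj (g y))) l2) l1.
Proof.
  induction l1; simpl.
  - ceq.
  - rewrite <- IHl1. clear IHl1.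
    assert (Cmult (f a) (Cconj (csum g l2)) = csum (fun y => Cmult (f a) (Cconj (g y))) l2).
    { induction l2; simpl. ceq. rewrite <- IHl2. ceq. }
    rewrite <- H. ceq.
Qed.

Lemma is_series_scalR (c : R) (f : nat -> R) l : is_series f l -> is_series (fun n => c * f n) (c * l).
Proof. intros Hf. apply (@is_series_scal_l R_AbsRing R_NormedModule c f l Hf). Qed.
Lemma is_series_plusR (f g : nat -> R) l1 l2 : is_series f l1 -> is_series g l2 ->
  is_series (fun n => f n + g n) (l1 + l2).
Proof. intros Hf Hg. apply (@is_series_plus R_AbsRing R_NormedModule f g l1 l2 Hf Hg). Qed.

Lemma is_series_rsum {A} (f : A -> nat -> R) (v : A -> R) l :
  (forall x, In x l -> is_series (f x) (v x)) ->
  is_series (fun k => rsum (fun x => f x k) l) (rsum v l).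
Proof.
  induction l; simpl; intros Hl.
  - unfold is_series. apply filterlim_ext with (fun _ => 0).
    { intros n; induction n. rewrite sum_O; reflexivity. rewrite sum_Sn, <- IHn.
      unfold plus; simpl; ring. }
    apply filterlim_const.
  - apply is_series_plusR. apply Hl; auto. apply IHl; auto.
Qed.

Lemma kappa_series rho a s u : kernel_convergent rho a -> rho < Re s -> rho < Re u ->
  is_series (fun k => fst (kterm a s u k)) (fst (kappa a s u)) /\
  is_series (fun k => snd (kterm a s u k)) (snd (kappa a s u)).
Proof.
  intros Hc Hs Hu. destruct (Hc s u Hs Hu) as [l Hl]. unfold kappa; simpl.
  split; apply Series_correct; eexists.
  apply (is_series_fst _ _ Hl). apply (is_series_snd _ _ Hl).
Qed.

Lemma is_series_re_wconj rho a s u w : kernel_convergent rho a -> rho < Re s -> rho < Re u ->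
  is_series (fun k => fst (Cmult w (Cconj (kterm a s u k)))) (fst (Cmult w (Cconj (kappa a s u)))).
Proof.
  intros Hc Hs Hu. destruct (kappa_series rho a s u Hc Hs Hu) as [H1 H2].
  assert (E: forall k, fst w * fst (kterm a s u k) + snd w * snd (kterm a s u k) =
     fst (Cmult w (Cconj (kterm a s u k)))).
  { intros; destruct (kterm a s u k); destruct w; simpl; ring. }
  assert (E2: fst w * fst (kappa a s u) + snd w * snd (kappa a s u) = fst (Cmult w (Cconj (kappa a s u)))).
  { destruct (kappa a s u); destruct w; simpl; ring. }
  rewrite <- E2. eapply is_series_ext. apply E.
  apply is_series_plusR; apply is_series_scalR; auto.
Qed.

Lemma csum_scal {A} (c : C) (f : A -> C) l : Cmult c (csum f l) = csum (fun x => Cmult c (f x)) l.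
Proof. induction l; simpl. ceq. rewrite <- IHl. destruct c, (f a), (csum f l). ceq. Qed.

Lemma csum_ext {A} (f g : A -> C) l : (forall x, In x l -> f x = g x) -> csum f l = csum g l.
Proof. induction l; simpl; intros Hfg; auto. rewrite Hfg, IHl; auto. Qed.

Lemma rsum_ext {A} (f g : A -> R) l : (forall x, In x l -> f x = g x) -> rsum f l = rsum g l.
Proof. induction l; simpl; intros Hfg; auto. rewrite Hfg, IHl; auto. Qed.


Section RK.
Variables (rho : R) (a : nat -> R).
Hypothesis Hconv : kernel_convergent rho a.
Variable H : (Hrho rho -> C) -> Prop.
Variable ip : (Hrho rho -> C) -> (Hrho rho -> C) -> C.
Hypothesis HH : is_RKHS rho a H ip.

Definition Gf (l : list (C * C)) : Hrho rho -> C :=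
  fold_right (fun p acc => fadd (fscale (fst p) (kfun rho a (snd p))) acc) fzero l.

Definition okpts (l : list (C * C)) := forall p, In p l -> rho < Re (snd p).

Lemma Gf_val l s : Gf l s = csum (fun p => Cmult (fst p) (kappa a (proj1_sig s) (snd p))) l.
Proof. induction l; simpl; auto. unfold fadd, fscale, kfun. rewrite <- IHl. reflexivity. Qed.

Lemma HFS : HilbertFunctionSpace H ip.
Proof. apply HH. Qed.

Lemma K_in_H u (Hu : rho < Re u) : H (kfun rho a u).
Proof. destruct HH as [_ [Hk _]]. apply (Hk (exist _ u Hu)). Qed.

Lemma Gf_in_H l : okpts l -> H (Gf l).
Proof.
  induction l; simpl; intros Hl.
  - apply (hfs_zero _ _ HFS).
  - apply (hfs_add _ _ HFS). apply (hfs_scale _ _ HFS). apply K_in_H. apply Hl; simpl; auto.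
    apply IHl. intros p Hp; apply Hl; simpl; auto.
Qed.

Lemma fadd_zero_r (f : Hrho rho -> C) : fadd f fzero = f.
Proof. apply functional_extensionality; intros; unfold fadd, fzero. ceq. Qed.
Lemma fscale_one (f : Hrho rho -> C) : fscale (RtoC 1) f = f.
Proof. apply functional_extensionality; intros; unfold fscale. ceq. Qed.

Lemma ip_lin c f g h : H f -> H g -> H h -> ip (fadd (fscale c f) g) h = Cplus (Cmult c (ip f h)) (ip g h).
Proof. apply (hfs_lin _ _ HFS). Qed.

Lemma ip_zero_l h : H h -> ip fzero h = RtoC 0.
Proof.
  intros Hh. pose proof (hfs_zero _ _ HFS) as H0.
  pose proof (ip_lin (RtoC 1) fzero fzero h H0 H0 Hh) as E.
  rewrite fscale_one, fadd_zero_r in E.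
  destruct (ip fzero h) as [x y]. unfold Cplus, Cmult in E; simpl in E. injection E; intros. apply C_ext; simpl; lra.
Qed.

Lemma ip_K_r g u (Hu : rho < Re u) : H g -> ip g (kfun rho a u) = g (exist _ u Hu).
Proof. intros Hg. destruct HH as [_ [_ Hr]]. apply (Hr g (exist _ u Hu) Hg). Qed.

Lemma ip_K_l g u (Hu : rho < Re u) : H g -> ip (kfun rho a u) g = Cconj (g (exist _ u Hu)).
Proof.
  intros Hg. rewrite (hfs_sym _ _ HFS g (kfun rho a u) Hg (K_in_H u Hu)).
  rewrite (ip_K_r g u Hu Hg). reflexivity.
Qed.

Lemma ip_Gf_l l g : okpts l -> H g ->
  ip (Gf l) g = csum (fun p => Cmult (fst p) (ip (kfun rho a (snd p)) g)) l.
Proof.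
  induction l; simpl; intros Hl Hg.
  - apply ip_zero_l; auto.
  - assert (Hl' : okpts l) by (intros p Hp; apply Hl; simpl; auto).
    rewrite ip_lin; auto. rewrite IHl; auto.
    apply K_in_H; apply Hl; simpl; auto. apply Gf_in_H; auto.
Qed.

Lemma ip_Gf_Gf l : okpts l ->
  ip (Gf l) (Gf l) = csum (fun p => Cmult (fst p) (Cconj (csum (fun q => Cmult (fst q) (kappa a (snd p) (snd q))) l))) l.
Proof.
  intros Hl. rewrite ip_Gf_l; auto. 2: apply Gf_in_H; auto.
  assert (forall l0, okpts l0 ->
    csum (fun p => Cmult (fst p) (ip (kfun rho a (snd p)) (Gf l))) l0 =
    csum (fun p => Cmult (fst p) (Cconj (csum (fun q => Cmult (fst q) (kappa a (snd p) (snd q))) l))) l0) as Hgen.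
  { intros l0 Hl0. induction l0; simpl; auto.
    rewrite IHl0 by (intros p Hp; apply Hl0; simpl; auto).
    f_equal. f_equal.
    assert (Hu : rho < Re (snd a0)) by (apply Hl0; simpl; auto).
    rewrite (ip_K_l _ _ Hu); auto. 2: apply Gf_in_H; auto.
    rewrite Gf_val. reflexivity. }
  apply Hgen; auto.
Qed.

Definition Phi (l : list (C * C)) (k : nat) : C :=
  csum (fun p => Cmult (fst p) (npow_neg (S k) (Cconj (snd p)))) l.

Lemma kterm_conj_pq (s u : C) k :
  Cconj (kterm a s u k) = Cmult (RtoC (a (S k))) (Cmult (npow_neg (S k) (Cconj s)) (Cconj (npow_neg (S k) (Cconj u)))).
Proof.
  unfold kterm. rewrite npow_add, !npow_conj.
  destruct (npow_neg (S k) s) as [x1 y1], (npow_neg (S k) (Cconj u)) as [x2 y2]. ceq.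
Qed.

Lemma norm_series l : okpts l ->
  is_series (fun k => a (S k) * nsq (Phi l k)) (fst (ip (Gf l) (Gf l))).
Proof.
  intros Hl. rewrite ip_Gf_Gf; auto.
  assert (E1 : forall p, Cmult (fst p) (Cconj (csum (fun q => Cmult (fst q) (kappa a (snd p) (snd q))) l))
     = csum (fun q => Cmult (Cmult (fst p) (Cconj (fst q))) (Cconj (kappa a (snd p) (snd q)))) l).
  { intros p. clear Hl. induction l; simpl. ceq. rewrite <- IHl.
    destruct (fst p), (fst a0), (kappa a (snd p) (snd a0)), (csum (fun q => Cmult (fst q) (kappa a (snd p) (snd q))) l). ceq. }
  rewrite re_csum.
  eapply is_series_ext.
  2: { apply is_series_rsum with (f := fun p k => fst (csum (fun q => Cmult (Cmult (fst p) (Cconj (fst q))) (Cconj (kterm a (snd p) (snd q) k))) l)).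
       intros p Hp. rewrite E1. rewrite re_csum.
       eapply is_series_ext.
       2: { apply is_series_rsum with (f := fun q k => fst (Cmult (Cmult (fst p) (Cconj (fst q))) (Cconj (kterm a (snd p) (snd q) k)))).
            intros q Hq. apply (is_series_re_wconj rho a); auto. }
       intros k. simpl. rewrite re_csum. reflexivity. }
  intros k. simpl.
  transitivity (fst (csum (fun p => csum (fun q => Cmult (Cmult (fst p) (Cconj (fst q))) (Cconj (kterm a (snd p) (snd q) k))) l) l)).
  { rewrite re_csum. reflexivity. }
  transitivity (fst (Cmult (RtoC (a (S k))) (Cmult (Phi l k) (Cconj (Phi l k))))).
  2: { unfold nsq. destruct (Phi l k). simpl. ring. }
  f_equal. unfold Phi. rewrite csum_mult_conj. rewrite csum_scal.
  apply csum_ext. intros p _. rewrite csum_scal. apply csum_ext. intros q _.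
  rewrite kterm_conj_pq.
  destruct (fst p), (fst q), (npow_neg (S k) (Cconj (snd p))), (npow_neg (S k) (Cconj (snd q))). ceq.
Qed.

End RK.


Section HS.
Variable T : Type.
Variable H : (T -> C) -> Prop.
Variable ip : (T -> C) -> (T -> C) -> C.
Hypothesis HF : HilbertFunctionSpace H ip.

Definition Q (f : T -> C) := fst (ip f f).
Definition rr (f g : T -> C) := fst (ip f g).

Lemma fext (f g : T -> C) : (forall s, f s = g s) -> f = g.
Proof. apply functional_extensionality. Qed.

Lemma H_zero : H fzero. Proof. apply (hfs_zero _ _ HF). Qed.
Lemma H_add f g : H f -> H g -> H (fadd f g). Proof. apply (hfs_add _ _ HF). Qed.
Lemma H_scale c f : H f -> H (fscale c f). Proof. apply (hfs_scale _ _ HF). Qed.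
Lemma H_sub f g : H f -> H g -> H (fsub f g).
Proof.
  intros Hf Hg. replace (fsub f g) with (fadd (fscale (RtoC (-1)) g) f).
  apply H_add; auto. apply H_scale; auto.
  apply fext; intros s; unfold fadd, fscale, fsub. destruct (f s), (g s). ceq.
Qed.

Lemma ip_zero_l' h : H h -> ip fzero h = RtoC 0.
Proof.
  intros Hh. pose proof (hfs_lin _ _ HF (RtoC 1) fzero fzero h H_zero H_zero Hh) as E.
  replace (fadd (fscale (RtoC 1) fzero) fzero) with (@fzero T) in E.
  2: { apply fext; intros; unfold fadd, fscale, fzero. ceq. }
  destruct (ip fzero h) as [x y]. unfold Cplus, Cmult in E; simpl in E. injection E; intros. apply C_ext; simpl; lra.
Qed.

Lemma ip_scale_l c f h : H f -> H h -> ip (fscale c f) h = Cmult c (ip f h).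
Proof.
  intros Hf Hh. pose proof (hfs_lin _ _ HF c f fzero h Hf H_zero Hh) as E.
  replace (fadd (fscale c f) fzero) with (fscale c f) in E.
  2: { apply fext; intros; unfold fadd, fscale, fzero. destruct (c), (f s). ceq. }
  rewrite E, ip_zero_l'; auto. destruct (Cmult c (ip f h)). ceq.
Qed.

Lemma ip_add_l f g h : H f -> H g -> H h -> ip (fadd f g) h = Cplus (ip f h) (ip g h).
Proof.
  intros Hf Hg Hh. pose proof (hfs_lin _ _ HF (RtoC 1) f g h Hf Hg Hh) as E.
  replace (fadd (fscale (RtoC 1) f) g) with (fadd f g) in E.
  2: { apply fext; intros; unfold fadd, fscale. destruct (f s), (g s). ceq. }
  rewrite E. destruct (ip f h), (ip g h). ceq.
Qed.

Lemma ip_sym f g : H f -> H g -> ip g f = Cconj (ip f g).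
Proof. apply (hfs_sym _ _ HF). Qed.

Lemma rr_sym f g : H f -> H g -> rr g f = rr f g.
Proof. intros; unfold rr; rewrite ip_sym; auto. Qed.

Lemma Q_ge0 f : H f -> 0 <= Q f.
Proof. intros Hf; apply (hfs_pos _ _ HF f Hf). Qed.

Lemma rr_add_l f g h : H f -> H g -> H h -> rr (fadd f g) h = rr f h + rr g h.
Proof. intros; unfold rr; rewrite ip_add_l; auto. Qed.

Lemma rr_scale_l (c : R) f h : H f -> H h -> rr (fscale (RtoC c) f) h = c * rr f h.
Proof. intros; unfold rr; rewrite ip_scale_l; auto. simpl. ring. Qed.

Lemma rr_add_r f g h : H f -> H g -> H h -> rr h (fadd f g) = rr h f + rr h g.
Proof.
  intros. rewrite rr_sym, rr_add_l, (rr_sym h f), (rr_sym h g); auto. apply H_add; auto.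
Qed.

Lemma rr_scale_r (c : R) f h : H f -> H h -> rr h (fscale (RtoC c) f) = c * rr h f.
Proof.
  intros. rewrite rr_sym, rr_scale_l, (rr_sym h f); auto. apply H_scale; auto.
Qed.

Lemma Q_expand f g (l : R) : H f -> H g ->
  Q (fadd f (fscale (RtoC l) g)) = Q f + 2 * l * rr f g + l * l * Q g.
Proof.
  intros Hf Hg. unfold Q. fold (rr (fadd f (fscale (RtoC l) g)) (fadd f (fscale (RtoC l) g))).
  assert (Hs : H (fscale (RtoC l) g)) by (apply H_scale; auto).
  rewrite rr_add_l, !rr_add_r, !rr_scale_r, !rr_scale_l, (rr_sym f g); auto.
  unfold rr; ring. all: try apply H_add; auto.
Qed.

Lemma CS f g : H f -> H g -> rr f g * rr f g <= Q f * Q g.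
Proof.
  intros Hf Hg.
  assert (Hq : forall l, 0 <= Q f + 2 * l * rr f g + l * l * Q g).
  { intros l. rewrite <- Q_expand; auto. apply Q_ge0. apply H_add; auto. apply H_scale; auto. }
  pose proof (Q_ge0 f Hf). pose proof (Q_ge0 g Hg).
  destruct (Req_dec (Q g) 0) as [E|E].
  - destruct (Req_dec (rr f g) 0) as [E2|E2].
    + rewrite E2, E; nra.
    + specialize (Hq (- (Q f + 1) / (2 * rr f g))). rewrite E in Hq.
      replace (2 * (- (Q f + 1) / (2 * rr f g)) * rr f g) with (- (Q f + 1)) in Hq by (field; auto).
      lra.
  - specialize (Hq (- rr f g / Q g)).
    assert (0 < Q g) by lra.
    replace (Q f + 2 * (- rr f g / Q g) * rr f g + - rr f g / Q g * (- rr f g / Q g) * Q g)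
      with (Q f - rr f g * rr f g / Q g) in Hq by (field; auto).
    apply Rmult_le_compat_r with (r := Q g) in Hq; [|lra].
    replace ((Q f - rr f g * rr f g / Q g) * Q g) with (Q f * Q g - rr f g * rr f g) in Hq by (field; auto).
    lra.
Qed.

Definition Nm f := sqrt (Q f).

Lemma Nm_eq f : Nm f = hnorm ip f.
Proof. reflexivity. Qed.

Lemma rr_bound f g : H f -> H g -> Rabs (rr f g) <= Nm f * Nm g.
Proof.
  intros Hf Hg. unfold Nm. rewrite <- sqrt_mult by (apply Q_ge0; auto).
  rewrite <- sqrt_Rsqr_abs. apply sqrt_le_1_alt. unfold Rsqr. apply CS; auto.
Qed.

End HS.


Definition cis (th : R) : C := (cos th, sin th).

Lemma cis_add x y : cis (x + y) = Cmult (cis x) (cis y).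
Proof. unfold cis. rewrite cos_plus, sin_plus. apply C_ext; simpl; ring. Qed.

Lemma cis_0 : cis 0 = RtoC 1.
Proof. unfold cis. rewrite cos_0, sin_0. reflexivity. Qed.

Lemma Cmod_cis x : Cmod (cis x) = 1.
Proof.
  unfold Cmod, cis; simpl. pose proof (sin2_cos2 x). unfold Rsqr in H.
  replace (cos x * (cos x * 1) + sin x * (sin x * 1)) with 1 by lra. apply sqrt_1.
Qed.

Lemma npow_cis n x y : npow_neg n (x, y) = Cmult (RtoC (exp (- x * ln (INR n)))) (cis (- y * ln (INR n))).
Proof.
  unfold npow_neg, cis; simpl.
  replace (- y * ln (INR n)) with (- (y * ln (INR n))) by ring.
  rewrite cos_neg, sin_neg. apply C_ext; simpl; ring.
Qed.

Definition geo (th : R) (N : nat) : C := csum (fun j => cis (INR j * th)) (seq 0 N).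

Lemma csum_app {A} (f : A -> C) l1 l2 : csum f (l1 ++ l2) = Cplus (csum f l1) (csum f l2).
Proof. induction l1; simpl. destruct (csum f l2); ceq. rewrite IHl1. destruct (f a), (csum f l1), (csum f l2); ceq. Qed.

Lemma geo_S th N : geo th (S N) = Cplus (geo th N) (cis (INR N * th)).
Proof. unfold geo. rewrite seq_S, csum_app. simpl. destruct (cis (INR N * th)). f_equal. ceq. Qed.

Lemma geo_tel th N : Cmult (Cminus (RtoC 1) (cis th)) (geo th N) = Cminus (RtoC 1) (cis (INR N * th)).
Proof.
  induction N.
  - unfold geo; simpl. rewrite Rmult_0_l, cis_0. ceq.
  - rewrite geo_S.
    replace (INR (S N) * th) with (INR N * th + th) by (rewrite S_INR; ring).
    rewrite cis_add.
    transitivity (Cplus (Cmult (Cminus (RtoC 1) (cis th)) (geo th N)) (Cmult (Cminus (RtoC 1) (cis th)) (cis (INR N * th)))).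
    + destruct (geo th N), (cis th), (cis (INR N * th)). ceq.
    + rewrite IHN. destruct (cis th), (cis (INR N * th)). ceq.
Qed.

Lemma Cmod_sub_le2 z : Cmod z = 1 -> Cmod (Cminus (RtoC 1) z) <= 2.
Proof.
  intros Hz. unfold Cminus. eapply Rle_trans. apply Cmod_triangle.
  rewrite Cmod_opp, Hz, Cmod_1. lra.
Qed.

Lemma geo_bound th N : 0 < Cmod (Cminus (RtoC 1) (cis th)) ->
  Cmod (geo th N) <= 2 / Cmod (Cminus (RtoC 1) (cis th)).
Proof.
  intros Hp. pose proof (geo_tel th N) as E.
  apply (f_equal Cmod) in E. rewrite Cmod_mult in E.
  pose proof (Cmod_sub_le2 _ (Cmod_cis (INR N * th))).
  apply Rmult_le_reg_l with (Cmod (Cminus (RtoC 1) (cis th))); auto.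
  rewrite E. field_simplify; lra.
Qed.

Lemma geo_0 N : geo 0 N = RtoC (INR N).
Proof.
  induction N. reflexivity. rewrite geo_S, IHN, Rmult_0_r, cis_0, S_INR. ceq.
Qed.

Lemma geo_le N th : Cmod (geo th N) <= INR N.
Proof.
  induction N. unfold geo; simpl. rewrite Cmod_0; lra.
  rewrite geo_S, S_INR. eapply Rle_trans. apply Cmod_triangle. rewrite Cmod_cis. lra.
Qed.

Lemma cis_ne1 th : th <> 0 -> Rabs th < 3 -> 0 < Cmod (Cminus (RtoC 1) (cis th)).
Proof.
  intros H0 H3. apply Cmod_gt_0. intros E.
  assert (Hs : sin th = 0).
  { apply (f_equal snd) in E. unfold cis in E; simpl in E. lra. }
  destruct (sin_eq_0_0 th Hs) as [k Hk].
  pose proof PI2_3_2.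
  destruct (Z.eq_dec k 0) as [Hk0|Hk0].
  - subst k. apply H0. rewrite Hk. simpl. ring.
  - assert (1 <= Rabs (IZR k)).
    { rewrite <- abs_IZR. apply IZR_le. lia. }
    rewrite Hk, Rabs_mult, (Rabs_right PI) in H3 by lra. nra.
Qed.


Fixpoint ps (W : nat -> R) (K : nat) : R :=
  match K with O => 0 | S K' => ps W K' + W K' end.

Lemma sum_n_ps W n : sum_n W n = ps W (S n).
Proof. induction n. rewrite sum_O; simpl. rewrite Rplus_0_l. reflexivity. rewrite sum_Sn, IHn. simpl. reflexivity. Qed.

Lemma series_eps W L : is_series W L -> forall eps, 0 < eps -> exists N, forall n, (N <= n)%nat -> Rabs (ps W n - L) < eps.
Proof.
  intros HW eps He.
  assert (Hl : locally L (fun x => Rabs (x - L) < eps)).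
  { exists (mkposreal eps He). intros y Hy. apply Hy. }
  destruct (HW _ Hl) as [N HN]. exists (S N). intros n Hn.
  destruct n. lia. rewrite <- sum_n_ps. apply HN. lia.
Qed.

Lemma ps_mono W n m : (forall k, 0 <= W k) -> (n <= m)%nat -> ps W n <= ps W m.
Proof.
  intros HW Hnm. induction Hnm. lra. simpl. specialize (HW m). lra.
Qed.

Lemma ps_le_lim W L n : is_series W L -> (forall k, 0 <= W k) -> ps W n <= L.
Proof.
  intros HS HW. destruct (Rle_dec (ps W n) L) as [?|Hn]; auto. exfalso.
  destruct (series_eps W L HS (ps W n - L)) as [N HN]. lra.
  specialize (HN (max N n) (Nat.le_max_l _ _)).
  pose proof (ps_mono W n (max N n) HW (Nat.le_max_r _ _)).
  rewrite Rabs_right in HN; lra.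
Qed.

Lemma lim_le_of_ps (u : nat -> R) U B : is_series u U -> (forall n, ps u n <= B) -> U <= B.
Proof.
  intros HU HB. destruct (Rle_dec U B) as [?|Hn]; auto. exfalso.
  destruct (series_eps u U HU (U - B)) as [N HN]. lra.
  specialize (HN N (le_n _)). specialize (HB N).
  apply Rabs_def2 in HN. lra.
Qed.

Lemma ps_plus f g n : ps (fun k => f k + g k) n = ps f n + ps g n.
Proof. induction n; simpl; [ring|rewrite IHn; ring]. Qed.
Lemma ps_scal c f n : ps (fun k => c * f k) n = c * ps f n.
Proof. induction n; simpl; [ring|rewrite IHn; ring]. Qed.
Lemma ps_le f g n : (forall k, f k <= g k) -> ps f n <= ps g n.
Proof. intros Hfg; induction n; simpl. lra. specialize (Hfg n). lra. Qed.

Definition tailf (W : nat -> R) (M : nat) (k : nat) : R := if Nat.ltb k M then 0 else W k.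

Lemma ps_tail_zero W M n : (n <= M)%nat -> ps (tailf W M) n = 0.
Proof.
  induction n; simpl; intros Hn; auto.
  replace (tailf W M n) with 0 by (unfold tailf; rewrite (proj2 (Nat.ltb_lt n M)) by lia; reflexivity).
  rewrite IHn by lia. ring.
Qed.

Lemma ps_tail_split W M n : (M <= n)%nat -> ps W n = ps W M + ps (tailf W M) n.
Proof.
  intros Hn. induction Hn.
  - rewrite ps_tail_zero by lia. ring.
  - simpl. rewrite IHHn.
    replace (tailf W M m) with (W m) by (unfold tailf; rewrite (proj2 (Nat.ltb_ge m M)) by lia; reflexivity). ring.
Qed.

Lemma ps_tail W L M n : is_series W L -> (forall k, 0 <= W k) -> ps (tailf W M) n <= L - ps W M.
Proof.
  intros HS HW. pose proof (ps_le_lim W L n HS HW).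
  destruct (le_lt_dec n M) as [Hn|Hn].
  - rewrite ps_tail_zero by lia. pose proof (ps_le_lim W L M HS HW). lra.
  - rewrite (ps_tail_split W M n) in H by lia. lra.
Qed.

Lemma tail_small W L : is_series W L -> forall eps, 0 < eps -> exists M, forall M', (M <= M')%nat -> L - ps W M' < eps.
Proof.
  intros HS eps He. destruct (series_eps W L HS eps He) as [N HN]. exists N. intros M' HM'.
  specialize (HN M' HM'). apply Rabs_def2 in HN. lra.
Qed.


Lemma nat_large r : exists N : nat, r < INR N.
Proof.
  destruct (archimed (Rabs r)) as [H1 H2].
  assert (0 < IZR (up (Rabs r))) by (pose proof (Rabs_pos r); lra).
  apply lt_IZR in H.
  exists (Z.to_nat (up (Rabs r))). rewrite INR_IZR_INZ, Z2Nat.id by lia.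
  pose proof (Rle_abs r). lra.
Qed.

Lemma min1 (P : nat -> Prop) (h : nat -> R) B :
  (forall m, (m <= B)%nat -> P m -> 0 < h m) ->
  exists e, 0 < e /\ forall m, (m <= B)%nat -> P m -> e <= h m.
Proof.
  induction B; intros Hh.
  - destruct (classic (P 0%nat)) as [HP|HP].
    + exists (h 0%nat). split. apply Hh; auto. intros m Hm HPm. replace m with 0%nat by lia. lra.
    + exists 1. split. lra. intros m Hm HPm. replace m with 0%nat in HPm by lia. tauto.
  - destruct IHB as [e [He Hle]]. intros; apply Hh; auto.
    destruct (classic (P (S B))) as [HP|HP].
    + exists (Rmin e (h (S B))). split. apply Rmin_pos; auto.
      intros m Hm HPm. destruct (Nat.eq_dec m (S B)). subst. apply Rmin_r.
      eapply Rle_trans. apply Rmin_l. apply Hle; auto. lia.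
    + exists e. split; auto. intros m Hm HPm. destruct (Nat.eq_dec m (S B)). subst; tauto.
      apply Hle; auto; lia.
Qed.

Lemma min2 (P : nat -> nat -> Prop) (h : nat -> nat -> R) A B :
  (forall n m, (n <= A)%nat -> (m <= B)%nat -> P n m -> 0 < h n m) ->
  exists e, 0 < e /\ forall n m, (n <= A)%nat -> (m <= B)%nat -> P n m -> e <= h n m.
Proof.
  induction A; intros Hh.
  - destruct (min1 (P 0%nat) (h 0%nat) B) as [e [He Hle]]. intros; apply Hh; auto.
    exists e; split; auto. intros n m Hn Hm HP. replace n with 0%nat in * by lia. auto.
  - destruct IHA as [e [He Hle]]. intros; apply Hh; auto.
    destruct (min1 (P (S A)) (h (S A)) B) as [e2 [He2 Hle2]]. intros; apply Hh; auto.
    exists (Rmin e e2). split. apply Rmin_pos; auto.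
    intros n m Hn Hm HP. destruct (Nat.eq_dec n (S A)). subst.
    eapply Rle_trans. apply Rmin_r. apply Hle2; auto.
    eapply Rle_trans. apply Rmin_l. apply Hle; auto. lia.
Qed.

Lemma csum_flat_map {A B} (f : B -> C) (g : A -> list B) l :
  csum f (flat_map g l) = csum (fun m => csum f (g m)) l.
Proof. induction l; simpl; auto. rewrite csum_app, IHl. reflexivity. Qed.

Lemma csum_map {A B} (f : B -> C) (g : A -> B) l : csum f (map g l) = csum (fun x => f (g x)) l.
Proof. induction l; simpl; auto. rewrite IHl. reflexivity. Qed.

Lemma nsq_Cmod z : nsq z = Cmod z * Cmod z.
Proof. unfold nsq, Cmod. rewrite sqrt_sqrt. simpl; ring. simpl. nra. Qed.

Lemma nsq_mult z w : nsq (Cmult z w) = nsq z * nsq w.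
Proof. rewrite !nsq_Cmod, Cmod_mult. ring. Qed.

Lemma Cmod_csum_le {A} (f : A -> C) l : Cmod (csum f l) <= rsum (fun x => Cmod (f x)) l.
Proof.
  induction l; simpl. rewrite Cmod_0; lra.
  eapply Rle_trans. apply Cmod_triangle. lra.
Qed.

Lemma rsum_le {A} (f g : A -> R) l : (forall x, In x l -> f x <= g x) -> rsum f l <= rsum g l.
Proof. induction l; simpl; intros; [lra|]. pose proof (H a (or_introl eq_refl)). pose proof (IHl (fun x Hx => H x (or_intror Hx))). lra. Qed.

Lemma rsum_scal {A} (c : R) (f : A -> R) l : rsum (fun x => c * f x) l = c * rsum f l.
Proof. induction l; simpl. ring. rewrite IHl; ring. Qed.

Lemma rsum_ge0 {A} (f : A -> R) l : (forall x, In x l -> 0 <= f x) -> 0 <= rsum f l.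
Proof. induction l; simpl; intros; [lra|]. pose proof (H a (or_introl eq_refl)). pose proof (IHl (fun x Hx => H x (or_intror Hx))). lra. Qed.

Lemma csum_split (f : nat -> C) n l : NoDup l ->
  csum f l = Cplus (if in_dec Nat.eq_dec n l then f n else RtoC 0)
                   (csum (fun m => if Nat.eq_dec m n then RtoC 0 else f m) l).
Proof.
  induction l; intros Hnd. simpl; ceq.
  inversion Hnd; subst. simpl csum. rewrite IHl; auto.
  destruct (in_dec Nat.eq_dec n (a :: l)) as [Hj|Hj]; destruct (in_dec Nat.eq_dec n l) as [Hk|Hk];
  destruct (Nat.eq_dec a n); subst; try tauto; simpl in Hj; try tauto.
  all: destruct (f n), (f a), (csum (fun m => if Nat.eq_dec m n then RtoC 0 else f m) l); ceq.
Qed.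


Section Constr.
Variables (a : nat -> R) (alpha : R) (t c : C) (dl : R) (M N : nat).

Definition zt : C := (fst t - alpha, - snd t).
Definition coefm (m j : nat) : C :=
  Cmult (Cmult (Copp c) (RtoC (/ INR N))) (Cmult (npow_neg m zt) (npow_neg m (0, INR j * dl))).
Definition lst : list (C * C) :=
  flat_map (fun m => map (fun j => (coefm m j, (alpha, INR j * dl))) (seq 0 N)) (seq 1 M).
Definition th (n m : nat) : R := dl * (ln (INR n) - ln (INR m)).
Definition pn (n : nat) : R := exp (- alpha * ln (INR n)).
Definition Tm (n m : nat) : C :=
  Cmult (Cmult (npow_neg m zt) (RtoC (pn n))) (Cmult (RtoC (/ INR N)) (geo (th n m) N)).
Definition Ef (n : nat) : C := Cminus (npow_neg n (Cconj t)) (csum (Tm n) (seq 1 M)).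

Lemma Phi_cons p l k : Phi (p :: l) k = Cplus (Cmult (fst p) (npow_neg (S k) (Cconj (snd p)))) (Phi l k).
Proof. reflexivity. Qed.

Lemma term_eq n m j : Cmult (coefm m j) (npow_neg n (Cconj (alpha, INR j * dl))) =
  Cmult (Copp c) (Cmult (Cmult (Cmult (npow_neg m zt) (RtoC (pn n))) (RtoC (/ INR N))) (cis (INR j * th n m))).
Proof.
  unfold coefm. replace (Cconj (alpha, INR j * dl)) with (alpha, - (INR j * dl)) by reflexivity.
  rewrite !npow_cis.
  assert (E : Cmult (cis (- (INR j * dl) * ln (INR m))) (cis (- - (INR j * dl) * ln (INR n))) = cis (INR j * th n m)).
  { rewrite <- cis_add. f_equal. unfold th. ring. }
  replace (exp (- 0 * ln (INR m))) with 1 by (rewrite Ropp_0, Rmult_0_l, exp_0; reflexivity).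
  rewrite <- E. unfold pn. ring.
Qed.

Lemma Phi_L k : Phi ((c, t) :: lst) k = Cmult c (Ef (S k)).
Proof.
  rewrite Phi_cons. simpl fst; simpl snd. unfold Phi at 1, lst. rewrite csum_flat_map.
  unfold Ef, Cminus. 
  assert (E : csum (fun m => csum (fun p => Cmult (fst p) (npow_neg (S k) (Cconj (snd p))))
        (map (fun j => (coefm m j, (alpha, INR j * dl))) (seq 0 N))) (seq 1 M)
     = Cmult (Copp c) (csum (Tm (S k)) (seq 1 M))).
  { rewrite csum_scal. apply csum_ext. intros m _. rewrite csum_map. simpl.
    unfold Tm, geo. rewrite (csum_scal (RtoC (/ INR N))).
    rewrite (csum_scal (Cmult (npow_neg m zt) (RtoC (pn (S k))))). rewrite csum_scal.
    apply csum_ext. intros j _. rewrite term_eq. ring. }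
  rewrite E. ring.
Qed.

End Constr.

Lemma Cmod_npow n z : Cmod (npow_neg n z) = exp (- fst z * ln (INR n)).
Proof.
  destruct z as [x y]. rewrite npow_cis, Cmod_mult, Cmod_cis, Cmod_R, Rabs_right.
  simpl; ring. left; apply exp_pos.
Qed.

Lemma npow_real n x : npow_neg n (x, 0) = RtoC (exp (- x * ln (INR n))).
Proof. rewrite npow_cis. replace (- 0 * ln (INR n)) with 0 by ring. rewrite cis_0. ring. Qed.

Lemma Tm_diag alpha t dl N n : (1 <= N)%nat ->
  Tm alpha t dl N n n = npow_neg n (Cconj t).
Proof.
  intros HN. unfold Tm. unfold th. replace (dl * (ln (INR n) - ln (INR n))) with 0 by ring.
  rewrite geo_0. unfold pn.
  replace (Cmult (RtoC (/ INR N)) (RtoC (INR N))) with (RtoC 1).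
  2: { assert (0 < INR N) by (apply lt_0_INR; lia). apply C_ext; simpl; field; lra. }
  rewrite <- npow_real, <- npow_add. rewrite Cmult_1_r. f_equal. unfold zt. destruct t; apply C_ext; simpl; ring.
Qed.

Definition wm (alpha : R) (t : C) (m : nat) : R := exp (- (fst t - alpha) * ln (INR m)).

Lemma Ef_bound alpha t dl M N n g : (1 <= n)%nat -> (1 <= N)%nat -> 0 <= g ->
  (forall m, (1 <= m <= M)%nat -> m <> n -> / INR N * Cmod (geo (th dl n m) N) <= g) ->
  Cmod (Ef alpha t dl M N n) <=
    (if Nat.leb n M then 0 else exp (- fst t * ln (INR n))) + pn alpha n * g * rsum (wm alpha t) (seq 1 M).
Proof.
  intros Hn HN Hg0 Hg. unfold Ef. rewrite (csum_split _ n (seq 1 M)) by apply seq_NoDup.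
  assert (Hrest : Cmod (csum (fun m => if Nat.eq_dec m n then RtoC 0 else Tm alpha t dl N n m) (seq 1 M))
     <= pn alpha n * g * rsum (wm alpha t) (seq 1 M)).
  { eapply Rle_trans. apply Cmod_csum_le. rewrite <- rsum_scal. apply rsum_le.
    intros m Hm. apply in_seq in Hm. destruct (Nat.eq_dec m n).
    - rewrite Cmod_0. unfold wm, pn. pose proof (exp_pos (- alpha * ln (INR n))).
      pose proof (exp_pos (- (fst t - alpha) * ln (INR m))).
      apply Rmult_le_pos. apply Rmult_le_pos; lra. lra.
    - unfold Tm. rewrite !Cmod_mult, !Cmod_R, Cmod_npow.
      rewrite (Rabs_right (pn alpha n)) by (left; apply exp_pos).
      rewrite Rabs_right by (left; apply Rinv_0_lt_compat, lt_0_INR; lia).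
      specialize (Hg m ltac:(lia) n0). unfold wm, zt. simpl fst.
      pose proof (exp_pos (- alpha * ln (INR n))). pose proof (exp_pos (- (fst t - alpha) * ln (INR m))).
      unfold pn. set (X := exp (- (fst t - alpha) * ln (INR m))) in *. set (Y := exp (- alpha * ln (INR n))) in *. replace (Y * g * X) with ((X * Y) * g) by ring. apply Rmult_le_compat_l; auto. apply Rmult_le_pos; lra. }
  destruct (in_dec Nat.eq_dec n (seq 1 M)) as [Hi|Hi].
  - apply in_seq in Hi. rewrite (proj2 (Nat.leb_le n M)) by lia.
    rewrite Tm_diag by auto.
    replace (Cminus (npow_neg n (Cconj t)) (Cplus (npow_neg n (Cconj t)) (csum (fun m => if Nat.eq_dec m n then RtoC 0 else Tm alpha t dl N n m) (seq 1 M))))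
      with (Copp (csum (fun m => if Nat.eq_dec m n then RtoC 0 else Tm alpha t dl N n m) (seq 1 M))) by ring.
    rewrite Cmod_opp. lra.
  - rewrite (proj2 (Nat.leb_gt n M)).
    2: { destruct (le_lt_dec n M); auto. exfalso; apply Hi; apply in_seq; lia. }
    replace (Cminus (npow_neg n (Cconj t)) (Cplus (RtoC 0) (csum (fun m => if Nat.eq_dec m n then RtoC 0 else Tm alpha t dl N n m) (seq 1 M))))
      with (Cplus (npow_neg n (Cconj t)) (Copp (csum (fun m => if Nat.eq_dec m n then RtoC 0 else Tm alpha t dl N n m) (seq 1 M)))) by ring.
    eapply Rle_trans. apply Cmod_triangle. rewrite Cmod_opp, Cmod_npow. simpl fst. lra.
Qed.


Definition Wf (a : nat -> R) (b : R) (k : nat) : R :=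
  a (S k) * (exp (- b * ln (INR (S k))) * exp (- b * ln (INR (S k)))).

Lemma ln_nat_ge0 n : (1 <= n)%nat -> 0 <= ln (INR n).
Proof. intros; rewrite <- ln_1. apply ln_le. lra. apply (le_INR 1); auto. Qed.

Lemma ln_nat_le n m : (1 <= n)%nat -> (n <= m)%nat -> ln (INR n) <= ln (INR m).
Proof. intros; apply ln_le. apply lt_0_INR; lia. apply le_INR; auto. Qed.

Lemma th_ok dl Mx n m : dl = / (ln (INR Mx) + 1) -> (1 <= Mx)%nat ->
  (1 <= n <= Mx)%nat -> (1 <= m <= Mx)%nat -> n <> m ->
  0 < Cmod (Cminus (RtoC 1) (cis (th dl n m))).
Proof.
  intros Hdl HMx Hn Hm Hnm. pose proof (ln_nat_ge0 Mx HMx).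
  assert (0 < dl) by (rewrite Hdl; apply Rinv_0_lt_compat; lra).
  apply cis_ne1; unfold th.
  - intros E. apply Rmult_integral in E. destruct E as [E|E]. lra.
    apply Hnm. apply INR_eq. apply ln_inv. apply lt_0_INR; lia. apply lt_0_INR; lia. lra.
  - pose proof (ln_nat_ge0 n ltac:(lia)). pose proof (ln_nat_ge0 m ltac:(lia)).
    pose proof (ln_nat_le n Mx ltac:(lia) ltac:(lia)). pose proof (ln_nat_le m Mx ltac:(lia) ltac:(lia)).
    rewrite Rabs_mult, Rabs_right by lra.
    assert (Rabs (ln (INR n) - ln (INR m)) <= ln (INR Mx)) by (apply Rabs_le; lra).
    assert (dl * (ln (INR Mx) + 1) = 1) by (rewrite Hdl; field; lra).
    nra.
Qed.

Lemma Wf_nonneg a b k : (forall n, (1 <= n)%nat -> 0 <= a n) -> 0 <= Wf a b k.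
Proof. intros Ha. unfold Wf. apply Rmult_le_pos. apply Ha; lia. pose proof (exp_pos (- b * ln (INR (S k)))). nra. Qed.

Lemma approx_main a alpha t c del Sx Sa :
  (forall n, (1 <= n)%nat -> 0 <= a n) ->
  is_series (Wf a (fst t)) Sx -> is_series (Wf a alpha) Sa -> 0 < del ->
  exists dl M N, forall U,
    is_series (fun k => a (S k) * nsq (Phi ((c, t) :: lst alpha t c dl M N) k)) U -> U < del.
Proof.
  intros Ha HSx HSa Hdel.
  pose proof (fun k => Wf_nonneg a (fst t) k Ha) as Wx0. pose proof (fun k => Wf_nonneg a alpha k Ha) as Wa0.
  set (K0 := 2 * nsq c + 1). assert (HK0 : 0 < K0) by (unfold K0; pose proof (nsq_ge0 c); lra).
  set (e := del / (3 * K0)). assert (He : 0 < e) by (unfold e; apply Rdiv_lt_0_compat; lra).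
  destruct (tail_small _ _ HSx e He) as [M HM].
  set (Cw := rsum (wm alpha t) (seq 1 M)).
  assert (HCw : 0 <= Cw) by (apply rsum_ge0; intros; left; apply exp_pos).
  assert (HSa0 : 0 <= Sa) by (apply (ps_le_lim _ Sa 0 HSa); auto).
  destruct (tail_small _ _ HSa (e / (Cw * Cw + 1))) as [M1 HM1].
  { apply Rdiv_lt_0_compat; nra. }
  set (Mx := max (max M1 M) 1).
  set (eta := Rmin 1 (e / ((Cw * Cw + 1) * (Sa + 1)) / 2)).
  assert (Heta : 0 < eta /\ eta <= 1 /\ eta <= e / ((Cw * Cw + 1) * (Sa + 1)) / 2).
  { unfold eta. split. apply Rmin_pos. lra. apply Rdiv_lt_0_compat; [|lra].
    apply Rdiv_lt_0_compat; nra. split. apply Rmin_l. apply Rmin_r. }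
  set (dl := / (ln (INR Mx) + 1)).
  destruct (min2 (fun n m => (1 <= n)%nat /\ (1 <= m)%nat /\ n <> m /\ (m <= M)%nat)
              (fun n m => Cmod (Cminus (RtoC 1) (cis (th dl n m)))) Mx M) as [eta0 [Heta0 Hmin]].
  { intros n m Hn Hm [H1 [H2 [H3 H4]]]. apply (th_ok dl Mx); auto; unfold Mx; lia. }
  destruct (nat_large (2 / (eta0 * eta))) as [N0 HN0].
  set (N := S N0).
  exists dl, M, N. intros U HU.
  assert (HN : (1 <= N)%nat) by (unfold N; lia).
  assert (HNpos : 0 < INR N) by (apply lt_0_INR; lia).
  set (bnd := fun k => 2 * nsq c * (tailf (Wf a (fst t)) M k + Cw * Cw * (eta * eta) * Wf a alpha k
                                     + Cw * Cw * tailf (Wf a alpha) Mx k)).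
  assert (Hterm : forall k, a (S k) * nsq (Phi ((c, t) :: lst alpha t c dl M N) k) <= bnd k).
  { intros k. rewrite Phi_L, nsq_mult.
    set (g := if Nat.leb (S k) Mx then eta else 1).
    assert (Hg0 : 0 <= g) by (unfold g; destruct (Nat.leb (S k) Mx); lra).
    assert (HEf := Ef_bound alpha t dl M N (S k) g ltac:(lia) HN Hg0).
    assert (Hgb : forall m, (1 <= m <= M)%nat -> m <> S k -> / INR N * Cmod (geo (th dl (S k) m) N) <= g).
    { intros m Hm Hmk. unfold g. destruct (Nat.leb (S k) Mx) eqn:EL.
      - apply Nat.leb_le in EL.
        assert (Hp : eta0 <= Cmod (Cminus (RtoC 1) (cis (th dl (S k) m)))).
        { apply Hmin; auto; lia. }
        pose proof (geo_bound (th dl (S k) m) N ltac:(lra)) as Hgeo.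
        assert (Hq : 2 / Cmod (Cminus (RtoC 1) (cis (th dl (S k) m))) <= 2 / eta0).
        { apply Rmult_le_compat_l. lra. apply Rinv_le_contravar; auto. }
        assert (Hr : 2 / eta0 <= eta * INR N).
        { unfold N. rewrite S_INR. assert (2 / eta0 = eta * (2 / (eta0 * eta))) by (field; lra). nra. }
        apply Rmult_le_reg_l with (INR N); auto. rewrite <- Rmult_assoc, Rinv_r by lra. lra.
      - pose proof (geo_le N (th dl (S k) m)).
        apply Rmult_le_reg_l with (INR N); auto. rewrite <- Rmult_assoc, Rinv_r by lra. lra. }
    specialize (HEf Hgb). change (rsum (wm alpha t) (seq 1 M)) with Cw in HEf.
    set (A := if Nat.leb (S k) M then 0 else exp (- fst t * ln (INR (S k)))) in HEf.
    set (B := pn alpha (S k) * g * Cw) in HEf.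
    assert (HA0 : 0 <= A) by (unfold A; destruct (Nat.leb (S k) M); [lra|left; apply exp_pos]).
    assert (HB0 : 0 <= B) by (unfold B, pn; pose proof (exp_pos (- alpha * ln (INR (S k)))); apply Rmult_le_pos; [apply Rmult_le_pos|]; lra).
    assert (HE2 : nsq (Ef alpha t dl M N (S k)) <= 2 * (A * A) + 2 * (B * B)).
    { rewrite nsq_Cmod. pose proof (Cmod_ge_0 (Ef alpha t dl M N (S k))). set (X := Cmod (Ef alpha t dl M N (S k))) in *. assert (X * X <= (A + B) * (A + B)) by (idtac; apply Rmult_le_compat; lra). pose proof (Rle_0_sqr (A - B)). unfold Rsqr in *. nra. }
    assert (Hak : 0 <= a (S k)) by (apply Ha; lia).
    assert (HAA : a (S k) * (A * A) = tailf (Wf a (fst t)) M k).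
    { unfold tailf, A, Wf. change (Nat.ltb k M) with (Nat.leb (S k) M). destruct (Nat.leb (S k) M); ring. }
    assert (HBB : a (S k) * (B * B) <= Cw * Cw * (eta * eta) * Wf a alpha k + Cw * Cw * tailf (Wf a alpha) Mx k).
    { unfold B, tailf, g. change (Nat.ltb k Mx) with (Nat.leb (S k) Mx).
      pose proof (Wa0 k) as Wk. unfold Wf, pn in *.
      set (P := exp (- alpha * ln (INR (S k)))) in *.
      destruct (Nat.leb (S k) Mx).
      - right; ring.
      - assert (0 <= Cw * Cw * (eta * eta) * (a (S k) * (P * P))).
        { apply Rmult_le_pos; auto. apply Rmult_le_pos; nra. }
        replace (a (S k) * (P * 1 * Cw * (P * 1 * Cw))) with (Cw * Cw * (a (S k) * (P * P))) by ring. lra. }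
    pose proof (nsq_ge0 c). unfold bnd.
    assert (a (S k) * nsq (Ef alpha t dl M N (S k)) <= 2 * tailf (Wf a (fst t)) M k +
      2 * (Cw * Cw * (eta * eta) * Wf a alpha k + Cw * Cw * tailf (Wf a alpha) Mx k)).
    { apply Rle_trans with (a (S k) * (2 * (A * A) + 2 * (B * B))). apply Rmult_le_compat_l; auto. nra. }
    replace (a (S k) * (nsq c * nsq (Ef alpha t dl M N (S k)))) with (nsq c * (a (S k) * nsq (Ef alpha t dl M N (S k)))) by ring.
    apply Rle_trans with (nsq c * (2 * tailf (Wf a (fst t)) M k +
      2 * (Cw * Cw * (eta * eta) * Wf a alpha k + Cw * Cw * tailf (Wf a alpha) Mx k))).
    apply Rmult_le_compat_l; auto. right; ring. }
  assert (Hps : forall n, ps bnd n = 2 * nsq c * (ps (tailf (Wf a (fst t)) M) n + Cw * Cw * (eta * eta) * ps (Wf a alpha) n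
                                     + Cw * Cw * ps (tailf (Wf a alpha) Mx) n)).
  { induction n; simpl. ring. rewrite IHn. unfold bnd. ring. }
  set (T1 := Sx - ps (Wf a (fst t)) M). set (T3 := Sa - ps (Wf a alpha) Mx).
  assert (HT1 : T1 < e) by (apply HM; lia).
  assert (HT3 : T3 < e / (Cw * Cw + 1)) by (apply HM1; unfold Mx; lia).
  assert (HT3p : 0 <= T3) by (unfold T3; pose proof (ps_le_lim _ Sa Mx HSa Wa0); lra).
  assert (HT1p : 0 <= T1) by (unfold T1; pose proof (ps_le_lim _ Sx M HSx Wx0); lra).
  assert (HB : U <= 2 * nsq c * (T1 + Cw * Cw * (eta * eta) * Sa + Cw * Cw * T3)).
  { apply (lim_le_of_ps _ U _ HU). intros n.
    eapply Rle_trans. apply ps_le. apply Hterm. rewrite Hps.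
    apply Rmult_le_compat_l. pose proof (nsq_ge0 c); lra.
    pose proof (ps_tail _ _ M n HSx Wx0). pose proof (ps_le_lim _ _ n HSa Wa0).
    pose proof (ps_tail _ _ Mx n HSa Wa0). fold T1 in H. fold T3 in H1.
    assert (0 <= Cw * Cw * (eta * eta)) by (apply Rmult_le_pos; nra).
    assert (0 <= Cw * Cw) by nra.
    apply Rplus_le_compat. apply Rplus_le_compat. lra. apply Rmult_le_compat_l; auto.
    apply Rmult_le_compat_l; auto. }
  assert (HX2 : Cw * Cw * (eta * eta) * Sa < e).
  { destruct Heta as [He1 [He2 He3]].
    assert (eta * eta <= eta) by nra.
    assert ((Cw * Cw + 1) * (Sa + 1) * eta <= e / 2).
    { assert (0 < (Cw * Cw + 1) * (Sa + 1)) by nra.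
      apply Rmult_le_reg_r with (/ ((Cw * Cw + 1) * (Sa + 1))). apply Rinv_0_lt_compat; auto.
      replace ((Cw * Cw + 1) * (Sa + 1) * eta * / ((Cw * Cw + 1) * (Sa + 1))) with eta by (field; repeat split; nra).
      replace (e / ((Cw * Cw + 1) * (Sa + 1)) / 2) with (e / 2 * / ((Cw * Cw + 1) * (Sa + 1))) in He3 by (field; repeat split; nra). lra. }
    assert (Cw * Cw * (eta * eta) * Sa <= (Cw * Cw + 1) * (Sa + 1) * eta).
    { assert (0 <= Cw * Cw) by nra. assert (0 <= eta * eta) by nra.
      apply Rle_trans with ((Cw * Cw + 1) * (Sa + 1) * (eta * eta)). 
      - assert (Cw * Cw * Sa <= (Cw * Cw + 1) * (Sa + 1)) by nra. nra.
      - apply Rmult_le_compat_l; nra. }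
    lra. }
  assert (HX3 : Cw * Cw * T3 < e).
  { assert (Cw * Cw * T3 <= (Cw * Cw + 1) * T3) by lra.
    assert ((Cw * Cw + 1) * T3 < e).
    { assert (0 < Cw * Cw + 1) by nra.
      apply Rmult_lt_reg_r with (/ (Cw * Cw + 1)). apply Rinv_0_lt_compat; auto.
      replace ((Cw * Cw + 1) * T3 * / (Cw * Cw + 1)) with T3 by (field; lra).
      replace (e * / (Cw * Cw + 1)) with (e / (Cw * Cw + 1)) by reflexivity. lra. }
    lra. }
  assert (Hdel3 : K0 * (3 * e) = del) by (unfold e; field; lra).
  assert (HX0 : 0 <= Cw * Cw * (eta * eta) * Sa) by (apply Rmult_le_pos; auto; apply Rmult_le_pos; nra).
  pose proof (nsq_ge0 c).
  assert (2 * nsq c * (T1 + Cw * Cw * (eta * eta) * Sa + Cw * Cw * T3) <= 2 * nsq c * (3 * e)).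
  { apply Rmult_le_compat_l; lra. }
  unfold K0 in Hdel3. nra.
Qed.


Section Tot.
Variables (rho : R) (a : nat -> R).
Hypothesis Ha : forall n, (1 <= n)%nat -> 0 <= a n.
Hypothesis Hconv : kernel_convergent rho a.
Variable H : (Hrho rho -> C) -> Prop.
Variable ip : (Hrho rho -> C) -> (Hrho rho -> C) -> C.
Hypothesis HH : is_RKHS rho a H ip.
Variable alpha : R.
Hypothesis Halpha : rho < alpha.

Definition okS (l : list (C * C)) := forall p, In p l -> fst (snd p) = alpha.

Lemma okS_okpts l : okS l -> okpts rho l.
Proof. intros Hl p Hp. unfold Re. rewrite Hl; auto. Qed.

Lemma W_series b : rho < b -> exists Sb, is_series (Wf a b) Sb.
Proof.
  intros Hb. destruct (kappa_series rho a (b, 0) (b, 0) Hconv Hb Hb) as [H1 _].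
  exists (fst (kappa a (b, 0) (b, 0))). eapply is_series_ext. 2: apply H1.
  intros k. unfold kterm, npow_neg, Wf, Cplus, Cmult, Cconj, RtoC, Re, Im. cbn [fst snd].
  replace ((0 + - 0) * ln (INR (S k))) with 0 by ring. rewrite cos_0, sin_0.
  replace (- (b + b) * ln (INR (S k))) with (- b * ln (INR (S k)) + - b * ln (INR (S k))) by ring.
  rewrite exp_plus. unfold Rminus. rewrite Rmult_0_r, Ropp_0, Rmult_0_r, Ropp_0, Rplus_0_r, Rmult_1_r. reflexivity.
Qed.

Lemma lst_okS t c dl M N : okS (lst alpha t c dl M N).
Proof.
  intros p Hp. unfold lst in Hp. apply in_flat_map in Hp. destruct Hp as [m [_ Hm]].
  apply in_map_iff in Hm. destruct Hm as [j [Hj _]]. subst p. reflexivity.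
Qed.

Lemma approx_K c t : rho < fst t -> forall del, 0 < del ->
  exists l, okS l /\ Q _ ip (Gf rho a ((c, t) :: l)) < del.
Proof.
  intros Ht del Hdel.
  destruct (W_series (fst t) Ht) as [Sx HSx]. destruct (W_series alpha Halpha) as [Sa HSa].
  destruct (approx_main a alpha t c del Sx Sa Ha HSx HSa Hdel) as [dl [M [N HU]]].
  exists (lst alpha t c dl M N). split. apply lst_okS.
  apply HU. unfold Q. apply (norm_series rho a Hconv H ip HH).
  intros p [Hp|Hp]. subst p; auto. apply okS_okpts in Hp; auto. apply lst_okS.
Qed.


Definition scl (c : C) (l : list (C * C)) := map (fun p => (Cmult c (fst p), snd p)) l.

Lemma Gf_app l1 l2 : Gf rho a (l1 ++ l2) = fadd (Gf rho a l1) (Gf rho a l2).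
Proof.
  apply functional_extensionality; intros s. unfold fadd. rewrite !Gf_val.
  induction l1; simpl. ring. rewrite IHl1. ring.
Qed.

Lemma Gf_scl c l : Gf rho a (scl c l) = fscale c (Gf rho a l).
Proof.
  apply functional_extensionality; intros s. unfold fscale. rewrite !Gf_val.
  induction l; simpl. ring. rewrite IHl. simpl. ring.
Qed.

Lemma okS_app l1 l2 : okS l1 -> okS l2 -> okS (l1 ++ l2).
Proof. intros H1 H2 p Hp. apply in_app_or in Hp. destruct Hp; auto. Qed.

Lemma okS_scl c l : okS l -> okS (scl c l).
Proof. intros Hl p Hp. unfold scl in Hp. apply in_map_iff in Hp. destruct Hp as [q [Hq Hq']]. subst p. simpl. apply Hl; auto. Qed.

Lemma HF : HilbertFunctionSpace H ip.
Proof. apply HH. Qed.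

Lemma GH l : okS l -> H (Gf rho a l).
Proof. intros; apply (Gf_in_H rho a H ip HH). apply okS_okpts; auto. Qed.

Lemma Q_scale (r : R) x : H x -> Q _ ip (fscale (RtoC r) x) = r * r * Q _ ip x.
Proof.
  intros Hx. pose proof (Q_expand _ H ip HF fzero x r (H_zero _ H ip HF) Hx) as E.
  replace (fadd fzero (fscale (RtoC r) x)) with (fscale (RtoC r) x) in E.
  2: { apply functional_extensionality; intros s; unfold fadd, fzero, fscale. ring. }
  rewrite E. unfold Q, rr. rewrite (ip_zero_l' _ H ip HF x Hx), (ip_zero_l' _ H ip HF fzero (H_zero _ H ip HF)). simpl. ring.
Qed.

Lemma Q_sub_sym x y : H x -> H y -> Q _ ip (fsub x y) = Q _ ip (fsub y x).
Proof.
  intros Hx Hy. replace (fsub x y) with (fscale (RtoC (-1)) (fsub y x)).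
  rewrite Q_scale. ring. apply (H_sub _ _ _ HF); auto.
  apply functional_extensionality; intros s; unfold fsub, fscale, Cminus. ring.
Qed.


Lemma sqrt_lt_helper q e : 0 <= q -> 0 < e -> q < e * e -> sqrt q < e.
Proof.
  intros Hq He Hqe. rewrite <- (sqrt_square e) by lra. apply sqrt_lt_1_alt. lra.
Qed.

Lemma small_abs_zero v K : 0 <= K -> (forall del, 0 < del -> Rabs v <= K * sqrt del) -> v = 0.
Proof.
  intros HK Hv. destruct (Req_dec v 0) as [E|E]; auto. exfalso.
  assert (Hp : 0 < Rabs v) by (apply Rabs_pos_lt; auto).
  set (d := Rabs v / (K + 1)). assert (Hd : 0 < d) by (unfold d; apply Rdiv_lt_0_compat; lra).
  specialize (Hv (d * d) ltac:(nra)). rewrite sqrt_square in Hv by lra.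
  unfold d in Hv. assert (K * (Rabs v / (K + 1)) < Rabs v).
  { apply Rmult_lt_reg_r with (K + 1). lra. replace (K * (Rabs v / (K + 1)) * (K + 1)) with (K * Rabs v) by (field; lra). nra. }
  lra.
Qed.

Lemma orth_to_zero h : H h -> (forall l, okS l -> rr _ ip h (Gf rho a l) = 0) -> forall s, h s = RtoC 0.
Proof.
  intros Hh Horth.
  assert (Hk : forall c t, rho < fst t -> rr _ ip h (fscale c (kfun rho a t)) = 0).
  { intros c t Ht. apply (small_abs_zero _ (Nm _ ip h)). unfold Nm; apply sqrt_pos.
    intros del Hdel. destruct (approx_K c t Ht del Hdel) as [l [Hl HQ]].
    assert (HKt : H (fscale c (kfun rho a t))) by (apply (H_scale _ _ _ HF); apply (K_in_H rho a H ip HH); auto).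
    assert (E : rr _ ip h (Gf rho a ((c, t) :: l)) = rr _ ip h (fscale c (kfun rho a t))).
    { simpl Gf. rewrite (rr_add_r _ _ _ HF); auto. rewrite Horth; auto. ring. apply GH; auto. }
    rewrite <- E. eapply Rle_trans. apply (rr_bound _ _ _ HF); auto.
    apply (Gf_in_H rho a H ip HH). intros p [Hp|Hp]. subst p; auto. apply okS_okpts in Hp; auto.
    apply Rmult_le_compat_l. unfold Nm; apply sqrt_pos. unfold Nm. apply sqrt_le_1_alt. lra. }
  intros s. destruct s as [t Ht].
  assert (Hr : ip h (kfun rho a t) = h (exist _ t Ht)) by (apply (ip_K_r rho a H ip HH); auto).
  assert (HK : H (kfun rho a t)) by (apply (K_in_H rho a H ip HH); auto).
  apply C_ext; simpl.
  - rewrite <- Hr. specialize (Hk (RtoC 1) t Ht). unfold rr in Hk. rewrite <- Hk.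
    f_equal. f_equal. apply functional_extensionality; intros; unfold fscale; ring.
  - rewrite <- Hr. specialize (Hk (0, 1) t Ht). unfold rr in Hk. rewrite <- Hk.
    assert (HsK : H (fscale (0, 1) (kfun rho a t))) by (apply (H_scale _ _ _ HF); auto).
    rewrite (ip_sym _ _ _ HF (fscale (0, 1) (kfun rho a t)) h HsK Hh).
    rewrite (ip_scale_l _ _ _ HF); auto. rewrite (ip_sym _ _ _ HF h (kfun rho a t)); auto.
    destruct (ip h (kfun rho a t)). simpl. ring.
Qed.


Lemma totality f : H f -> forall eps, 0 < eps ->
  exists l, okS l /\ hnorm ip (fsub f (Gf rho a l)) < eps.
Proof.
  intros Hf eps Heps.
  set (Qf := fun l => Q _ ip (fsub f (Gf rho a l))).
  assert (HQf0 : forall l, okS l -> 0 <= Qf l).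
  { intros l Hl. apply (Q_ge0 _ _ _ HF). apply (H_sub _ _ _ HF); auto. apply GH; auto. }
  set (E := fun x => exists l, okS l /\ x = - Qf l).
  assert (Hb : bound E).
  { exists 0. intros x [l [Hl ->]]. pose proof (HQf0 l Hl). lra. }
  assert (Hne : exists x, E x).
  { exists (- Qf nil). exists nil. split; auto. intros p []. }
  destruct (completeness E Hb Hne) as [m [Hub Hlub]].
  set (q0 := - m).
  assert (P1 : forall l, okS l -> q0 <= Qf l).
  { intros l Hl. assert (- Qf l <= m) by (apply Hub; exists l; auto). unfold q0; lra. }
  assert (P2 : forall e, 0 < e -> exists l, okS l /\ Qf l < q0 + e).
  { intros e He. apply NNPP. intros Hn.
    assert (m <= m - e).
    { apply Hlub. intros x [l [Hl ->]]. destruct (Rlt_dec (Qf l) (q0 + e)) as [Hlt|Hge].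
      exfalso; apply Hn; exists l; auto. unfold q0 in Hge. lra. }
    lra. }
  assert (P2' : forall n : nat, exists l, okS l /\ Qf l < q0 + / (INR n + 1)).
  { intros n. apply P2. apply Rinv_0_lt_compat. pose proof (pos_INR n); lra. }
  set (ls := fun n => proj1_sig (constructive_indefinite_description _ (P2' n))).
  assert (Hls : forall n, okS (ls n) /\ Qf (ls n) < q0 + / (INR n + 1)).
  { intros n. unfold ls. destruct (constructive_indefinite_description _ (P2' n)) as [l Hl]. exact Hl. }
  set (F := fun n => Gf rho a (ls n)).
  assert (HFn : forall n, H (F n)) by (intros n; apply GH; apply Hls).
  assert (Hcauchy : forall n k, Q _ ip (fsub (F k) (F n)) <= 2 * / (INR n + 1) + 2 * / (INR k + 1)).
  { intros n k.
    set (x := fsub f (F n)). set (y := fsub f (F k)).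
    assert (Hx : H x) by (apply (H_sub _ _ _ HF); auto).
    assert (Hy : H y) by (apply (H_sub _ _ _ HF); auto).
    pose proof (Q_expand _ _ _ HF x y 1 Hx Hy) as E1.
    pose proof (Q_expand _ _ _ HF x y (-1) Hx Hy) as E2.
    assert (Em : fadd x (fscale (RtoC (-1)) y) = fsub (F k) (F n)).
    { apply functional_extensionality; intros s. unfold x, y, fadd, fscale, fsub, Cminus. ring. }
    set (mid := scl (RtoC (/ 2)) (ls n ++ ls k)).
    assert (Hmid : okS mid) by (apply okS_scl, okS_app; apply Hls).
    assert (Ep : fadd x (fscale (RtoC 1) y) = fscale (RtoC 2) (fsub f (Gf rho a mid))).
    { apply functional_extensionality; intros s. unfold mid. rewrite Gf_scl, Gf_app.
      unfold x, y, fadd, fscale, fsub, Cminus, F. apply C_ext; simpl; field. }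
    rewrite Ep, Q_scale in E1. rewrite Em in E2.
    2: { apply (H_sub _ _ _ HF); auto. apply GH; auto. }
    pose proof (P1 mid Hmid). destruct (Hls n) as [_ Hn]. destruct (Hls k) as [_ Hk].
    fold (Qf mid) in E1. unfold x in E1, E2. unfold y in E1, E2.
    fold (F n) in *. change (Q _ ip (fsub f (F n))) with (Qf (ls n)) in E1, E2.
    change (Q _ ip (fsub f (F k))) with (Qf (ls k)) in E1, E2.
    lra. }
  assert (Hcomp : forall e, 0 < e -> exists N, forall m n, (N <= m)%nat -> (N <= n)%nat ->
      hnorm ip (fsub (F m) (F n)) < e).
  { intros e He. destruct (nat_large (4 / (e * e))) as [N HN]. exists N.
    intros m0 n Hm Hn. apply sqrt_lt_helper; auto.
    apply (Q_ge0 _ _ _ HF). apply (H_sub _ _ _ HF); auto.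
    eapply Rle_lt_trans. apply Hcauchy.
    assert (INR N <= INR n) by (apply le_INR; auto). assert (INR N <= INR m0) by (apply le_INR; auto).
    assert (0 < e * e) by nra.
    assert (4 < e * e * INR N).
    { apply Rmult_lt_reg_r with (/ (e * e)). apply Rinv_0_lt_compat; auto.
      replace (e * e * INR N * / (e * e)) with (INR N) by (field; lra). lra. }
    assert (/ (INR n + 1) < e * e / 4).
    { assert (e * e * INR N <= e * e * INR n) by (apply Rmult_le_compat_l; lra).
      pose proof (pos_INR n).
      apply Rmult_lt_reg_r with ((INR n + 1) * 4). nra.
      replace (/ (INR n + 1) * ((INR n + 1) * 4)) with 4 by (field; lra).
      replace (e * e / 4 * ((INR n + 1) * 4)) with (e * e * INR n + e * e) by field. lra. }
    assert (/ (INR m0 + 1) < e * e / 4).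
    { assert (e * e * INR N <= e * e * INR m0) by (apply Rmult_le_compat_l; lra).
      pose proof (pos_INR m0).
      apply Rmult_lt_reg_r with ((INR m0 + 1) * 4). nra.
      replace (/ (INR m0 + 1) * ((INR m0 + 1) * 4)) with 4 by (field; lra).
      replace (e * e / 4 * ((INR m0 + 1) * 4)) with (e * e * INR m0 + e * e) by field. lra. }
    lra. }
  destruct (hfs_complete _ _ HF F HFn Hcomp) as [ginf [Hginf Hlim]].
  set (h := fsub f ginf).
  assert (Hh : H h) by (apply (H_sub _ _ _ HF); auto).
  assert (Horth : forall l, okS l -> rr _ ip h (Gf rho a l) = 0).
  { intros l Hl. set (G := Gf rho a l). assert (HG : H G) by (apply GH; auto).
    set (r0 := rr _ ip h G).
    assert (Hlam : forall lam, 2 * lam * r0 <= lam * lam * Q _ ip G).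
    { intros lam. apply Rnot_lt_le. intros Hc.
      set (d := 2 * lam * r0 - lam * lam * Q _ ip G).
      assert (Hd : 0 < d) by (unfold d; lra).
      set (NG := Nm _ ip G). assert (HNG : 0 <= NG) by (unfold NG, Nm; apply sqrt_pos).
      destruct (Hlim (d / (3 * (2 * Rabs lam * NG + 1)))) as [N1 HN1].
      { apply Rdiv_lt_0_compat; auto. pose proof (Rabs_pos lam). nra. }
      destruct (nat_large (3 / d)) as [N2 HN2].
      set (n := max N1 N2).
      specialize (HN1 n (Nat.le_max_l _ _)).
      assert (HnN2 : INR N2 <= INR n) by (apply le_INR; apply Nat.le_max_r).
      destruct (Hls n) as [_ HQn].
      assert (Hq : q0 <= Qf (ls n ++ scl (RtoC lam) l)) by (apply P1; apply okS_app; [apply Hls| apply okS_scl; auto]).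
      assert (Ex : fsub f (Gf rho a (ls n ++ scl (RtoC lam) l)) = fadd (fsub f (F n)) (fscale (RtoC (- lam)) G)).
      { apply functional_extensionality; intros s. rewrite Gf_app, Gf_scl. unfold fadd, fscale, fsub, Cminus, F, G.
        apply C_ext; simpl; ring. }
      unfold Qf in Hq. rewrite Ex in Hq.
      rewrite (Q_expand _ _ _ HF) in Hq. 2: apply (H_sub _ _ _ HF); auto. 2: auto.
      assert (Exn : fsub f (F n) = fadd h (fsub ginf (F n))).
      { apply functional_extensionality; intros s. unfold h, fadd, fsub, Cminus. ring. }
      rewrite Exn in Hq. rewrite (rr_add_l _ _ _ HF) in Hq; auto. 2: apply (H_sub _ _ _ HF); auto.
      rewrite <- Exn in Hq. fold r0 in Hq.
      pose proof (rr_bound _ _ _ HF (fsub ginf (F n)) G ltac:(apply (H_sub _ _ _ HF); auto) HG) as Hbd.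
      assert (HNm : Nm _ ip (fsub ginf (F n)) = hnorm ip (fsub (F n) ginf)).
      { unfold Nm, hnorm. f_equal. apply Q_sub_sym; auto. }
      rewrite HNm in Hbd. fold NG in Hbd.
      set (en := rr _ ip (fsub ginf (F n)) G) in *.
      assert (Hen : Rabs (2 * - lam * en) <= d / 3).
      { rewrite !Rabs_mult, Rabs_Ropp, (Rabs_right 2) by lra.
        assert (hnorm ip (fsub (F n) ginf) * NG <= d / (3 * (2 * Rabs lam * NG + 1)) * NG).
        { apply Rmult_le_compat_r; auto; lra. }
        assert (d / (3 * (2 * Rabs lam * NG + 1)) * NG * (2 * Rabs lam) <= d / 3).
        { pose proof (Rabs_pos lam).
          apply Rmult_le_reg_r with (3 * (2 * Rabs lam * NG + 1)). nra.
          replace (d / (3 * (2 * Rabs lam * NG + 1)) * NG * (2 * Rabs lam) * (3 * (2 * Rabs lam * NG + 1)))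
            with (d * (NG * (2 * Rabs lam))) by (field; nra).
          replace (d / 3 * (3 * (2 * Rabs lam * NG + 1))) with (d * (2 * Rabs lam * NG + 1)) by field. nra. }
        pose proof (Rabs_pos lam). pose proof (Rabs_pos en). nra. }
      assert (Hinv : / (INR n + 1) < d / 3).
      { assert (3 < d * INR n).
        { apply Rmult_lt_reg_r with (/ d). apply Rinv_0_lt_compat; auto.
          replace (d * INR n * / d) with (INR n) by (field; lra). unfold Rdiv in HN2. lra. }
        apply Rmult_lt_reg_r with ((INR n + 1) * 3). pose proof (pos_INR n); nra.
        replace (/ (INR n + 1) * ((INR n + 1) * 3)) with 3 by (field; pose proof (pos_INR n); lra). nra. }
      assert (Hb1 : 2 * - lam * en <= d / 3) by (pose proof (Rle_abs (2 * - lam * en)); lra).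
      assert (Hb2 : - (d / 3) <= 2 * - lam * en).
      { pose proof (Rle_abs (- (2 * - lam * en))) as Hq2. rewrite Rabs_Ropp in Hq2. lra. }
      change (Qf (ls n)) with (Q (Hrho rho) ip (fsub f (F n))) in HQn. unfold d in *. lra. }
    set (QG := Q _ ip G). fold QG in Hlam. assert (HQG : 0 <= QG) by (apply (Q_ge0 _ _ _ HF); auto).
    specialize (Hlam (r0 / (QG + 1))).
    assert (2 * r0 * r0 * (QG + 1) <= r0 * r0 * QG).
    { apply Rmult_le_reg_r with (/ ((QG + 1) * (QG + 1))). apply Rinv_0_lt_compat; nra.
      replace (2 * r0 * r0 * (QG + 1) * / ((QG + 1) * (QG + 1))) with (2 * (r0 / (QG + 1)) * r0) by (field; lra).
      replace (r0 * r0 * QG * / ((QG + 1) * (QG + 1))) with (r0 / (QG + 1) * (r0 / (QG + 1)) * QG) by (field; lra).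
      lra. }
    nra. }
  pose proof (orth_to_zero h Hh Horth) as Hz.
  assert (Efg : f = ginf).
  { apply functional_extensionality; intros s. specialize (Hz s). unfold h, fsub in Hz.
    replace (f s) with (Cplus (Cminus (f s) (ginf s)) (ginf s)) by ring. rewrite Hz. ring. }
  destruct (Hlim eps Heps) as [N HN]. exists (ls N). split. apply Hls.
  specialize (HN N (le_n _)). rewrite Efg. unfold hnorm in *. fold (Q _ ip (fsub ginf (F N))).
  change (sqrt (Q _ ip (fsub ginf (F N))) < eps). change (sqrt (Q _ ip (fsub (F N) ginf)) < eps) in HN. rewrite Q_sub_sym; auto.
Qed.

End Tot.


Lemma no_pow_eq p q m n : Nat.gcd p q = 1%nat -> (2 <= p)%nat -> (1 <= m)%nat ->
  (p ^ m = q ^ n)%nat -> False.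
Proof.
  intros Hg Hp Hm E.
  assert (Hd : Nat.divide p (q ^ n)).
  { rewrite <- E. destruct m. lia. rewrite Nat.pow_succ_r'. apply Nat.divide_factor_l. }
  clear E. induction n.
  - simpl in Hd. apply Nat.divide_1_r in Hd. lia.
  - apply IHn. rewrite Nat.pow_succ_r' in Hd. eapply Nat.gauss; eauto.
Qed.

Fixpoint cpow (z : C) (n : nat) : C := match n with O => RtoC 1 | S n' => Cmult z (cpow z n') end.

Lemma cis_nat n x : cis (INR n * x) = cpow (cis x) n.
Proof.
  induction n. simpl. rewrite Rmult_0_l. apply cis_0.
  rewrite S_INR. replace ((INR n + 1) * x) with (x + INR n * x) by ring. rewrite cis_add, IHn. reflexivity.
Qed.

Lemma Cmult_integral x y : Cmult x y = RtoC 0 -> x = RtoC 0 \/ y = RtoC 0.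
Proof.
  intros E. destruct (classic (x = RtoC 0)); auto. destruct (classic (y = RtoC 0)); auto.
  exfalso. apply (Cmult_neq_0 x y); auto.
Qed.

(* Artin-type independence *)
Lemma artin (z w d : R -> C) (bs : list R) : NoDup bs ->
  (forall b b', In b bs -> In b' bs -> b <> b' -> z b <> z b' \/ w b <> w b') ->
  (forall j k, csum (fun b => Cmult (d b) (Cmult (cpow (z b) j) (cpow (w b) k))) bs = RtoC 0) ->
  forall b, In b bs -> d b = RtoC 0.
Proof.
  revert d. induction bs as [|b0 rest IH]; intros d Hnd Hdist Hsum b Hb. destruct Hb.
  inversion Hnd as [|? ? Hnin Hnd']; subst.
  set (d1 := fun b => Cmult (d b) (Cminus (z b) (z b0))).
  set (d2 := fun b => Cmult (d b) (Cminus (w b) (w b0))).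
  assert (H1 : forall b, In b rest -> d1 b = RtoC 0).
  { apply IH; auto. intros; apply Hdist; simpl; auto.
    intros j k. specialize (Hsum (S j) k) as Hs1. specialize (Hsum j k) as Hs0. simpl in Hs1, Hs0.
    unfold d1. simpl in Hs1.
    assert (E : csum (fun b => Cmult (Cmult (d b) (Cminus (z b) (z b0))) (Cmult (cpow (z b) j) (cpow (w b) k))) rest
       = Cminus (csum (fun b => Cmult (d b) (Cmult (Cmult (z b) (cpow (z b) j)) (cpow (w b) k))) rest)
                (Cmult (z b0) (csum (fun b => Cmult (d b) (Cmult (cpow (z b) j) (cpow (w b) k))) rest))).
    { clear. induction rest; simpl. ring. rewrite IHrest. ring. }
    rewrite E. 
    replace (csum (fun b => Cmult (d b) (Cmult (Cmult (z b) (cpow (z b) j)) (cpow (w b) k))) rest) with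
      (Cminus (RtoC 0) (Cmult (d b0) (Cmult (Cmult (z b0) (cpow (z b0) j)) (cpow (w b0) k)))).
    2: { rewrite <- Hs1. ring. }
    replace (csum (fun b => Cmult (d b) (Cmult (cpow (z b) j) (cpow (w b) k))) rest) with
      (Cminus (RtoC 0) (Cmult (d b0) (Cmult (cpow (z b0) j) (cpow (w b0) k)))).
    2: { rewrite <- Hs0. ring. }
    ring. }
  assert (H2 : forall b, In b rest -> d2 b = RtoC 0).
  { apply IH; auto. intros; apply Hdist; simpl; auto.
    intros j k. specialize (Hsum j (S k)) as Hs1. specialize (Hsum j k) as Hs0. simpl in Hs1, Hs0.
    unfold d2.
    assert (E : csum (fun b => Cmult (Cmult (d b) (Cminus (w b) (w b0))) (Cmult (cpow (z b) j) (cpow (w b) k))) rest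
       = Cminus (csum (fun b => Cmult (d b) (Cmult (cpow (z b) j) (Cmult (w b) (cpow (w b) k)))) rest)
                (Cmult (w b0) (csum (fun b => Cmult (d b) (Cmult (cpow (z b) j) (cpow (w b) k))) rest))).
    { clear. induction rest; simpl. ring. rewrite IHrest. ring. }
    rewrite E.
    replace (csum (fun b => Cmult (d b) (Cmult (cpow (z b) j) (Cmult (w b) (cpow (w b) k)))) rest) with
      (Cminus (RtoC 0) (Cmult (d b0) (Cmult (cpow (z b0) j) (Cmult (w b0) (cpow (w b0) k))))).
    2: { rewrite <- Hs1. ring. }
    replace (csum (fun b => Cmult (d b) (Cmult (cpow (z b) j) (cpow (w b) k))) rest) with
      (Cminus (RtoC 0) (Cmult (d b0) (Cmult (cpow (z b0) j) (cpow (w b0) k)))).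
    2: { rewrite <- Hs0. ring. }
    ring. }
  assert (Hr : forall b, In b rest -> d b = RtoC 0).
  { intros b' Hb'. assert (b' <> b0) by (intros ->; tauto).
    destruct (Hdist b' b0 ltac:(simpl; auto) ltac:(simpl; auto) H) as [Hz|Hw].
    - specialize (H1 b' Hb'). unfold d1 in H1. apply Cmult_integral in H1. destruct H1; auto.
      exfalso; apply Hz. replace (z b') with (Cplus (Cminus (z b') (z b0)) (z b0)) by ring. rewrite H0. ring.
    - specialize (H2 b' Hb'). unfold d2 in H2. apply Cmult_integral in H2. destruct H2; auto.
      exfalso; apply Hw. replace (w b') with (Cplus (Cminus (w b') (w b0)) (w b0)) by ring. rewrite H0. ring. }
  destruct Hb as [<-|Hb]; auto.
  specialize (Hsum 0%nat 0%nat). simpl in Hsum.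
  rewrite (csum_ext _ (fun _ => RtoC 0)) in Hsum.
  2: { intros x Hx. rewrite Hr; auto. ring. }
  assert (csum (fun _ : R => RtoC 0) rest = RtoC 0) by (clear; induction rest; simpl; auto; rewrite IHrest; ring).
  rewrite H in Hsum. rewrite <- Hsum. ring.
Qed.

Lemma cis_eq_diff x y : cis x = cis y -> exists k : Z, x - y = IZR k * PI.
Proof.
  intros E. apply sin_eq_0_0.
  assert (cis (x - y) = RtoC 1).
  { replace (x - y) with (x + - y) by ring. rewrite cis_add, E, <- cis_add.
    replace (y + - y) with 0 by ring. apply cis_0. }
  apply (f_equal snd) in H. unfold cis in H. simpl in H. exact H.
Qed.

Lemma ln_nat_pos p : (2 <= p)%nat -> 0 < ln (INR p).
Proof.
  intros Hp. rewrite <- ln_1. apply ln_increasing. lra.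
  apply (lt_INR 1); lia.
Qed.

Lemma distinct_pq p q b b' : Nat.gcd p q = 1%nat -> (2 <= p)%nat -> (2 <= q)%nat -> b <> b' ->
  cis (b * ln (INR p)) = cis (b' * ln (INR p)) -> cis (b * ln (INR q)) = cis (b' * ln (INR q)) -> False.
Proof.
  intros Hg Hp Hq Hbb Ep Eq.
  pose proof (ln_nat_pos p Hp) as Lp. pose proof (ln_nat_pos q Hq) as Lq.
  destruct (cis_eq_diff _ _ Ep) as [k1 Hk1]. destruct (cis_eq_diff _ _ Eq) as [k2 Hk2].
  assert (Hd : b - b' <> 0) by lra.
  assert (HPI : 0 < PI) by apply PI_RGT_0.
  assert (Hk1z : k1 <> 0%Z).
  { intros ->. simpl in Hk1. assert ((b - b') * ln (INR p) = 0) by lra. apply Rmult_integral in H. lra. }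
  assert (Hk2z : k2 <> 0%Z).
  { intros ->. simpl in Hk2. assert ((b - b') * ln (INR q) = 0) by lra. apply Rmult_integral in H. lra. }
  assert (Erel : IZR k1 * ln (INR q) = IZR k2 * ln (INR p)).
  { apply Rmult_eq_reg_r with PI; [|lra].
    replace (IZR k1 * ln (INR q) * PI) with ((IZR k1 * PI) * ln (INR q)) by ring.
    replace (IZR k2 * ln (INR p) * PI) with ((IZR k2 * PI) * ln (INR p)) by ring.
    rewrite <- Hk1, <- Hk2. replace (b * ln (INR p) - b' * ln (INR p)) with ((b - b') * ln (INR p)) by ring.
    replace (b * ln (INR q) - b' * ln (INR q)) with ((b - b') * ln (INR q)) by ring. ring. }
  apply (f_equal Rabs) in Erel. rewrite !Rabs_mult, !(Rabs_right (ln _)) in Erel by lra.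
  rewrite <- !abs_IZR in Erel.
  set (m := Z.to_nat (Z.abs k1)). set (n := Z.to_nat (Z.abs k2)).
  assert (Hm : INR m = IZR (Z.abs k1)) by (unfold m; rewrite INR_IZR_INZ, Z2Nat.id by lia; reflexivity).
  assert (Hn : INR n = IZR (Z.abs k2)) by (unfold n; rewrite INR_IZR_INZ, Z2Nat.id by lia; reflexivity).
  rewrite <- Hm, <- Hn in Erel.
  rewrite <- !ln_pow in Erel by (apply (lt_INR 0); lia).
  apply ln_inv in Erel; try (apply pow_lt; apply (lt_INR 0); lia).
  rewrite <- !pow_INR in Erel. apply INR_eq in Erel.
  apply (no_pow_eq p q n m Hg Hp). unfold n; lia. auto.
Qed.

Lemma kl_Gf rho a alpha bs c : klincomb rho a alpha bs c = Gf rho a (map (fun b => (c b, (alpha, b))) bs).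
Proof. induction bs; simpl; auto. rewrite IHbs. reflexivity. Qed.

Lemma series_zero_terms u : is_series u 0 -> (forall k, 0 <= u k) -> forall k, u k = 0.
Proof.
  intros Hs Hu k. pose proof (ps_le_lim u 0 (S k) Hs Hu). simpl in H.
  pose proof (ps_mono u 0 k Hu ltac:(lia)). simpl in H0. pose proof (Hu k). lra.
Qed.

Lemma nsq_zero z : nsq z = 0 -> z = RtoC 0.
Proof. unfold nsq; intros. destruct z as [x y]; simpl in *. apply C_ext; simpl; nra. Qed.

Lemma supp_pow a p q : admissible a -> supp a p -> supp a q -> forall j k, supp a (p ^ S j * q ^ S k).
Proof.
  intros [_ [Hmul _]] Hp Hq.
  assert (Hpow : forall x, supp a x -> forall j, supp a (x ^ S j)).
  { intros x Hx j. induction j. simpl. rewrite Nat.mul_1_r. auto. rewrite Nat.pow_succ_r'. apply Hmul; auto. }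
  intros j k. apply Hmul; apply Hpow; auto.
Qed.

Section LI.
Variables (rho : R) (a : nat -> R).
Hypothesis Ha : forall n, (1 <= n)%nat -> 0 <= a n.
Hypothesis Hadm : admissible a.
Hypothesis Hconv : kernel_convergent rho a.
Variable H : (Hrho rho -> C) -> Prop.
Variable ip : (Hrho rho -> C) -> (Hrho rho -> C) -> C.
Hypothesis HH : is_RKHS rho a H ip.
Variable alpha : R.
Hypothesis Halpha : rho < alpha.

Lemma lin_indep bs c : NoDup bs -> (forall s, klincomb rho a alpha bs c s = RtoC 0) ->
  forall b, In b bs -> c b = RtoC 0.
Proof.
  intros Hnd Hz.
  set (l := map (fun b => (c b, (alpha, b))) bs).
  assert (Hok : okpts rho l).
  { intros p Hp. unfold l in Hp. apply in_map_iff in Hp. destruct Hp as [b [<- _]]. simpl. auto. }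
  assert (Hzero : Gf rho a l = fzero).
  { apply functional_extensionality; intros s. unfold fzero. rewrite <- (Hz s), kl_Gf. reflexivity. }
  pose proof (norm_series rho a Hconv H ip HH l Hok) as Hs.
  rewrite Hzero in Hs.
  rewrite (ip_zero_l' _ H ip (HF rho a H ip HH) fzero (H_zero _ H ip (HF rho a H ip HH))) in Hs.
  simpl in Hs.
  assert (Hterms := series_zero_terms _ Hs).
  assert (HD : forall n, supp a n -> csum (fun b => Cmult (c b) (cis (b * ln (INR n)))) bs = RtoC 0).
  { intros n [Hn1 Hn2]. destruct n. lia.
    assert (Han : 0 < a (S n)) by (pose proof (Ha (S n) Hn1); lra).
    assert (Hk := Hterms ltac:(intros k; apply Rmult_le_pos; [apply Ha; lia| apply nsq_ge0]) n). simpl in Hk.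
    apply Rmult_integral in Hk. destruct Hk as [Hk|Hk]. lra.
    apply nsq_zero in Hk. unfold Phi, l in Hk. rewrite csum_map in Hk.
    rewrite (csum_ext _ (fun b => Cmult (RtoC (exp (- alpha * ln (INR (S n))))) (Cmult (c b) (cis (b * ln (INR (S n))))))) in Hk.
    2: { intros b _. cbn [fst snd]. replace (Cconj (alpha, b)) with (alpha, - b) by reflexivity.
         rewrite npow_cis. replace (- - b * ln (INR (S n))) with (b * ln (INR (S n))) by ring. ring. }
    rewrite <- csum_scal in Hk. apply Cmult_integral in Hk. destruct Hk as [Hk|Hk]; auto.
    exfalso. apply (f_equal fst) in Hk. cbn [fst RtoC] in Hk. pose proof (exp_pos (- alpha * ln (INR (S n)))). lra. }
  pose proof Hadm as Hadm0.
  destruct Hadm as [_ [_ [p [q [Hp [Hq [Hp1 [Hq1 Hg]]]]]]]].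
  assert (Hp2 : (2 <= p)%nat) by (destruct Hp; lia).
  assert (Hq2 : (2 <= q)%nat) by (destruct Hq; lia).
  set (z := fun b => cis (b * ln (INR p))). set (w := fun b => cis (b * ln (INR q))).
  assert (Hzne : forall b, z b <> RtoC 0).
  { intros b E. apply (f_equal Cmod) in E. unfold z in E. rewrite Cmod_cis, Cmod_0 in E. lra. }
  assert (Hwne : forall b, w b <> RtoC 0).
  { intros b E. apply (f_equal Cmod) in E. unfold w in E. rewrite Cmod_cis, Cmod_0 in E. lra. }
  assert (Hart := artin z w (fun b => Cmult (c b) (Cmult (z b) (w b))) bs Hnd).
  intros b Hb. 
  assert (Hd : Cmult (c b) (Cmult (z b) (w b)) = RtoC 0).
  { apply Hart; auto.
    - intros b1 b2 _ _ Hne. destruct (classic (z b1 = z b2)); auto. right. intros Ew.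
      apply (distinct_pq p q b1 b2 Hg Hp2 Hq2 Hne); auto.
    - intros j k. pose proof (HD _ (supp_pow a p q Hadm0 Hp Hq j k)) as E.
      rewrite <- E. apply csum_ext. intros b0 _.
      assert (P0 : 0 < INR p) by (apply (lt_INR 0); lia). assert (Q0 : 0 < INR q) by (apply (lt_INR 0); lia).
      rewrite mult_INR, !pow_INR, ln_mult, !ln_pow by (try apply pow_lt; auto).
      replace (b0 * (INR (S j) * ln (INR p) + INR (S k) * ln (INR q))) with
        (INR (S j) * (b0 * ln (INR p)) + INR (S k) * (b0 * ln (INR q))) by ring.
      rewrite cis_add, !cis_nat. cbn [cpow]. unfold z, w. ring. }
  apply Cmult_integral in Hd. destruct Hd as [Hd|Hd]; auto.
  apply Cmult_integral in Hd. destruct Hd as [Hd|Hd]. exfalso; apply (Hzne b); auto. exfalso; apply (Hwne b); auto.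
Qed.

End LI.


Lemma kl_ext rho a alpha bs c c' : (forall x, In x bs -> c x = c' x) ->
  klincomb rho a alpha bs c = klincomb rho a alpha bs c'.
Proof. induction bs; simpl; intros Hc; auto. rewrite Hc, IHbs; auto. Qed.

Lemma kl_upd rho a alpha bs c b d : NoDup bs -> In b bs ->
  klincomb rho a alpha bs (fun x => if Req_EM_T x b then Cplus (c x) d else c x) =
  fadd (fscale d (kfun rho a (alpha, b))) (klincomb rho a alpha bs c).
Proof.
  induction bs as [|x bs IH]; intros Hnd Hb. destruct Hb.
  inversion Hnd; subst. simpl.
  destruct (Req_EM_T x b) as [->|Hxb].
  - rewrite (kl_ext _ _ _ bs _ c).
    2: { intros y Hy. destruct (Req_EM_T y b); auto. subst; tauto. }
    apply functional_extensionality; intros s; unfold fadd, fscale. ring.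
  - destruct Hb as [Hb|Hb]. exfalso; auto. rewrite IH; auto.
    apply functional_extensionality; intros s; unfold fadd, fscale. ring.
Qed.

Lemma Gf_to_kl rho a alpha l : (forall p, In p l -> fst (snd p) = alpha) ->
  exists bs c, NoDup bs /\ klincomb rho a alpha bs c = Gf rho a l.
Proof.
  induction l as [|[d u] l IH]; intros Hl.
  - exists nil, (fun _ => RtoC 0). split. constructor. reflexivity.
  - destruct IH as [bs [c [Hnd Heq]]]. intros p Hp; apply Hl; simpl; auto.
    assert (Hu : u = (alpha, snd u)).
    { destruct u as [u1 u2]. specialize (Hl (d, (u1, u2)) (or_introl eq_refl)). simpl in Hl. subst. reflexivity. }
    simpl Gf. rewrite Hu, <- Heq. set (b := snd u). clearbody b.
    destruct (in_dec Req_EM_T b bs) as [Hin|Hnin].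
    + exists bs, (fun x => if Req_EM_T x b then Cplus (c x) d else c x). split; auto.
      apply kl_upd; auto.
    + exists (b :: bs), (fun x => if Req_EM_T x b then d else c x). split. constructor; auto.
      simpl. destruct (Req_EM_T b b) as [_|]; [|tauto].
      rewrite (kl_ext _ _ _ bs _ c); auto.
      intros y Hy. destruct (Req_EM_T y b); auto. subst; tauto.
Qed.

Theorem corollary5p6 (rho : R) (a : nat -> R)
  (Ha_nonneg : forall n : nat, (1 <= n)%nat -> 0 <= a n)
  (Ha_adm : admissible a)
  (Hconv : kernel_convergent rho a)
  (H : (Hrho rho -> C) -> Prop)
  (ip : (Hrho rho -> C) -> (Hrho rho -> C) -> C)
  (HH : is_RKHS rho a H ip) :
  forall alpha : R, rho < alpha ->
    (forall (bs : list R) (c : R -> C), NoDup bs ->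
       (forall s : Hrho rho, klincomb rho a alpha bs c s = RtoC 0) ->
       forall b, In b bs -> c b = RtoC 0) /\
    (forall f : Hrho rho -> C, H f ->
       forall eps : R, 0 < eps ->
       exists (bs : list R) (c : R -> C),
         hnorm ip (fsub f (klincomb rho a alpha bs c)) < eps).
Proof.
  intros alpha Halpha. split.
  - intros bs c Hnd Hz. apply (lin_indep rho a Ha_nonneg Ha_adm Hconv H ip HH alpha Halpha); auto.
  - intros f Hf eps Heps.
    destruct (totality rho a Ha_nonneg Hconv H ip HH alpha Halpha f Hf eps Heps) as [l [Hl Hn]].
    destruct (Gf_to_kl rho a alpha l Hl) as [bs [c [_ Heq]]].
    exists bs, c. rewrite Heq. exact Hn.
Qed.
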